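(* Let $K$ be a class of structures whose isomorphism problem is $\Sigma^1_1$-complete. If a Turing degree $\mathbf d$ is loquaciously high for isomorphism for $K$, then $\mathbf d$ is uniformly high for isomorphism for $K$ and $\mathcal O$ is c.e. relative to $\mathbf d$.
   Context: $\mathcal O$ denotes Kleene's set of notations for computable ordinals. Fix a standard effective listing $(\mathcal M_i:i\in\omega)$ of all computable structures. The isomorphism problem for $K$ is $\Sigma^1_1$-complete if for every $\Sigma^1_1$ set $X\subseteq\omega$ there is a computable function $n\mapsto(a_n,b_n)$ such that for every $n$, $\mathcal M_{a_n},\mathcal M_{b_n}\in K$, and $\mathcal M_{a_n}\cong\mathcal M_{b_n}$ iff $n\in X$. $\mathbf d$ is uniformly high for isomorphism for $K$ if there are $D\in\mathbf d$ and a Turing functional $\Phi$ such that whenever $\mathcal M_i,\mathcal M_j\in K$ and $\mathcal M_i\cong\mathcal M_j$, the function $n\mapsto\Phi^D(i,j,n)$ is total and is an isomorphism from $\mathcal M_i$ onto $\mathcal M_j$. $\mathbf d$ is loquaciously high for isomorphism for $K$ if there are $D\in\mathbf d$ and a Turing functional $\Theta$ such that $\Theta^D(i,j,n)$ converges for all $i,j,n$, and whenever $\mathcal M_i,\mathcal M_j\in K$ and $\mathcal M_i\cong\mathcal M_j$, the function $\Theta^D(i,j,\cdot)$ is an isomorphism from $\mathcal M_i$ onto $\mathcal M_j$ and $\Theta^D(j,i,\cdot)$ is its inverse. *)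

(* Defs.v *)
From Stdlib Require Import Arith List.
Import ListNotations.

Definition pair (x y : nat) : nat := (x + y) * (x + y + 1) / 2 + y.

Definition next_pair (p : nat * nat) : nat * nat :=
  match p with
  | (0, y) => (S y, 0)
  | (S x, y) => (x, S y)
  end.
Definition unpair (n : nat) : nat * nat := Nat.iter n next_pair (0, 0).

(* Unary functions on nat (tuples coded by pairing); the oracle is a
   total function A : nat -> nat. *)
Inductive code : Type :=
| CZero | CSucc | CP1 | CP2 | COrac
| CPair (f g : code)
| CComp (f g : code)
| CRec (f g : code)        (* h<x,0> = f x ; h<x,n+1> = g<x,<n,h<x,n>>> *)
| CMu (f : code).          (* x |-> least n with f<x,n> = 0 *)

Inductive eval (A : nat -> nat) : code -> nat -> nat -> Prop :=
| eZero x : eval A CZero x 0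
| eSucc x : eval A CSucc x (S x)
| eP1 x y : eval A CP1 (pair x y) x
| eP2 x y : eval A CP2 (pair x y) y
| eOrac x : eval A COrac x (A x)
| ePair f g x y z : eval A f x y -> eval A g x z -> eval A (CPair f g) x (pair y z)
| eComp f g x y z : eval A g x y -> eval A f y z -> eval A (CComp f g) x z
| eRec0 f g x y : eval A f x y -> eval A (CRec f g) (pair x 0) y
| eRecS f g x n y z : eval A (CRec f g) (pair x n) y ->
    eval A g (pair x (pair n y)) z -> eval A (CRec f g) (pair x (S n)) z
| eMu f x n : eval A f (pair x n) 0 ->
    (forall m, m < n -> exists y, y <> 0 /\ eval A f (pair x m) y) ->
    eval A (CMu f) x n.

Fixpoint decode_fuel (fuel n : nat) : code :=
  match fuel with
  | 0 => CZero
  | S fu =>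
    match n with
    | 0 => CZero
    | S m =>
      let (t, r) := unpair m in
      let (a, b) := unpair r in
      match t mod 9 with
      | 0 => CZero
      | 1 => CSucc
      | 2 => CP1
      | 3 => CP2
      | 4 => COrac
      | 5 => CPair (decode_fuel fu a) (decode_fuel fu b)
      | 6 => CComp (decode_fuel fu a) (decode_fuel fu b)
      | 7 => CRec (decode_fuel fu a) (decode_fuel fu b)
      | _ => CMu (decode_fuel fu a)
      end
    end
  end.
Definition decode (n : nat) : code := decode_fuel (S n) n.

Definition Phi (A : nat -> nat) (e x y : nat) : Prop := eval A (decode e) x y.
Definition phi (e x y : nat) : Prop := Phi (fun _ => 0) e x y.

(* sets of naturals are nat -> bool; as oracles, their characteristic fn *)
Definition chi (D : nat -> bool) : nat -> nat := fun x => if D x then 1 else 0.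

Definition Treducible (B A : nat -> bool) : Prop :=
  exists e, forall n, Phi (chi A) e n (chi B n).

Definition IsTuringDegree (d : (nat -> bool) -> Prop) : Prop :=
  exists A, forall B, d B <-> (Treducible B A /\ Treducible A B).

(* Structures in the relational language {R_k : k in nat} (each R_k may hold
   of tuples of any finite length); domain a subset of nat. *)
Record structure : Type := Struct {
  sdom : nat -> Prop;
  srel : nat -> list nat -> Prop }.

Fixpoint code_list (t : list nat) : nat :=
  match t with [] => 0 | x :: t' => S (pair x (code_list t')) end.

(* The standard listing: M_i is the structure whose atomic diagram is
   computed by phi_i:  x in dom  iff phi_i(<0,x>) = 1,
   R_k(t)  iff phi_i(<k+1, code t>) = 1. *)
Definition M (i : nat) : structure :=
  Struct (fun x => phi i (pair 0 x) 1)
         (fun k t => phi i (pair (S k) (code_list t)) 1).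

Definition IsCompIndex (i : nat) : Prop :=
  forall x, exists b, b <= 1 /\ phi i x b.

Definition inK (K : structure -> Prop) (i : nat) : Prop :=
  IsCompIndex i /\ K (M i).

Definition IsIso (S T : structure) (f : nat -> nat) : Prop :=
  (forall x, sdom S x -> sdom T (f x)) /\
  (forall x y, sdom S x -> sdom S y -> f x = f y -> x = y) /\
  (forall y, sdom T y -> exists x, sdom S x /\ f x = y) /\
  (forall k t, Forall (sdom S) t -> (srel S k t <-> srel T k (map f t))).

Definition Isomorphic (S T : structure) : Prop := exists f, IsIso S T f.

(* X is Sigma^1_1 iff for some e:  n in X <-> exists f : nat -> nat,
   forall m, Phi_e^f(<n,m>) converges with value 0  (normal form). *)
Definition Sigma11 (X : nat -> Prop) : Prop :=
  exists e, forall n, X n <-> exists f : nat -> nat, forall m, Phi f e (pair n m) 0.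

Definition IsoProblemSigma11Complete (K : structure -> Prop) : Prop :=
  forall X, Sigma11 X ->
  exists e, forall n, exists a b,
    phi e n (pair a b) /\ inK K a /\ inK K b /\
    (Isomorphic (M a) (M b) <-> X n).

Definition UniformlyHigh (K : structure -> Prop) (d : (nat -> bool) -> Prop) : Prop :=
  exists D, d D /\ exists e, forall i j,
    inK K i -> inK K j -> Isomorphic (M i) (M j) ->
    exists f : nat -> nat,
      (forall n, Phi (chi D) e (pair i (pair j n)) (f n)) /\ IsIso (M i) (M j) f.

Definition LoquaciouslyHigh (K : structure -> Prop) (d : (nat -> bool) -> Prop) : Prop :=
  exists D, d D /\ exists e,
    (forall i j n, exists y, Phi (chi D) e (pair i (pair j n)) y) /\
    (forall i j, inK K i -> inK K j -> Isomorphic (M i) (M j) ->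
      exists f g : nat -> nat,
        (forall n, Phi (chi D) e (pair i (pair j n)) (f n)) /\
        (forall n, Phi (chi D) e (pair j (pair i n)) (g n)) /\
        IsIso (M i) (M j) f /\
        (forall x, sdom (M i) x -> g (f x) = x) /\
        (forall y, sdom (M j) y -> f (g y) = y)).

Inductive inO : nat -> Prop :=
| O_one : inO 1
| O_succ a : inO a -> inO (2 ^ a)
| O_lim e : (forall n, exists y, phi e n y) ->
    (forall n y z, phi e n y -> phi e (S n) z -> ltO y z) -> inO (3 * 5 ^ e)
with ltO : nat -> nat -> Prop :=
| lt_succ a : inO a -> ltO a (2 ^ a)
| lt_succ_trans b a : ltO b a -> ltO b (2 ^ a)
| lt_lim b e n y : inO (3 * 5 ^ e) -> phi e n y -> ltO b y -> ltO b (3 * 5 ^ e).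

Definition KleeneO (n : nat) : Prop := inO n.

Definition CErelative (X : nat -> Prop) (d : (nat -> bool) -> Prop) : Prop :=
  exists D, d D /\ exists e, forall n, X n <-> exists y, Phi (chi D) e n y.

(* Main.v *)
Require Import Defs.
From Stdlib Require Import Arith Lia List Setoid Morphisms Classical ClassicalEpsilon.
Import ListNotations.

Lemma tri_step s : (S s) * (S s + 1) / 2 = s * (s + 1) / 2 + S s.
Proof.
  replace (S s * (S s + 1)) with (s * (s + 1) + S s * 2) by lia.
  rewrite Nat.div_add by lia. reflexivity.
Qed.

Lemma pair_next p : pair (fst (next_pair p)) (snd (next_pair p)) = S (pair (fst p) (snd p)).
Proof.
  destruct p as [[|x] y]; simpl; unfold pair.
  - rewrite !Nat.add_0_r. simpl (0 + y). rewrite tri_step. lia.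
  - replace (x + S y) with (S x + y) by lia. lia.
Qed.

Lemma pair_unpair n : pair (fst (unpair n)) (snd (unpair n)) = n.
Proof.
  induction n; [reflexivity|].
  unfold unpair; simpl. fold (unpair n). rewrite pair_next, IHn. reflexivity.
Qed.

Lemma pair_ge x y : x <= pair x y /\ y <= pair x y.
Proof.
  unfold pair; split; [|lia].
  assert (x <= (x + y) * (x + y + 1) / 2); [|lia].
  assert (H: (2 * x) / 2 <= (x + y) * (x + y + 1) / 2).
  { apply Nat.Div0.div_le_mono; nia. }
  rewrite Nat.mul_comm, Nat.div_mul in H by lia. exact H.
Qed.

Lemma pair_zero x y : pair x y = 0 -> x = 0 /\ y = 0.
Proof.
  intros H. destruct (pair_ge x y). lia.
Qed.

Lemma unpair_pair_gen n : forall x y, pair x y = n -> unpair n = (x, y).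
Proof.
  induction n; intros x y H.
  - apply pair_zero in H as [-> ->]. reflexivity.
  - assert (Hp : exists p, next_pair p = (x, y)).
    { destruct y as [|y'].
      + destruct x as [|x']. { unfold pair in H; simpl in H. discriminate. }
        exists (0, x'). reflexivity.
      + exists (S x, y'). reflexivity. }
    destruct Hp as [p Hp].
    assert (Hn : pair (fst p) (snd p) = n).
    { pose proof (pair_next p) as E. rewrite Hp in E. simpl in E. lia. }
    unfold unpair; simpl. fold (unpair n). rewrite (IHn _ _ Hn).
    destruct p; exact Hp.
Qed.

Lemma unpair_pair x y : unpair (pair x y) = (x, y).
Proof. apply unpair_pair_gen; reflexivity. Qed.

Lemma pair_inj x y x' y' : pair x y = pair x' y' -> x = x' /\ y = y'.
Proof.
  intros H. pose proof (unpair_pair x y). rewrite H, unpair_pair in H0.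
  injection H0; auto.
Qed.

Definition fstn n := fst (unpair n).
Definition sndn n := snd (unpair n).
Lemma fstn_pair x y : fstn (pair x y) = x.
Proof. unfold fstn; rewrite unpair_pair; reflexivity. Qed.
Lemma sndn_pair x y : sndn (pair x y) = y.
Proof. unfold sndn; rewrite unpair_pair; reflexivity. Qed.
Lemma pair_fs n : pair (fstn n) (sndn n) = n.
Proof. apply pair_unpair. Qed.

Section EvalInd.
Variable A : nat -> nat.
Variable P : code -> nat -> nat -> Prop.
Hypothesis hZero : forall x, P CZero x 0.
Hypothesis hSucc : forall x, P CSucc x (S x).
Hypothesis hP1 : forall x y, P CP1 (pair x y) x.
Hypothesis hP2 : forall x y, P CP2 (pair x y) y.
Hypothesis hOrac : forall x, P COrac x (A x).
Hypothesis hPair : forall f g x y z, eval A f x y -> P f x y -> eval A g x z -> P g x z ->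
  P (CPair f g) x (pair y z).
Hypothesis hComp : forall f g x y z, eval A g x y -> P g x y -> eval A f y z -> P f y z ->
  P (CComp f g) x z.
Hypothesis hRec0 : forall f g x y, eval A f x y -> P f x y -> P (CRec f g) (pair x 0) y.
Hypothesis hRecS : forall f g x n y z, eval A (CRec f g) (pair x n) y -> P (CRec f g) (pair x n) y ->
    eval A g (pair x (pair n y)) z -> P g (pair x (pair n y)) z -> P (CRec f g) (pair x (S n)) z.
Hypothesis hMu : forall f x n, eval A f (pair x n) 0 -> P f (pair x n) 0 ->
    (forall m, m < n -> exists y, y <> 0 /\ eval A f (pair x m) y /\ P f (pair x m) y) ->
    P (CMu f) x n.

Fixpoint eval_ind2 c x y (H : eval A c x y) {struct H} : P c x y.
Proof.
  destruct H.
  - apply hZero.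
  - apply hSucc.
  - apply hP1.
  - apply hP2.
  - apply hOrac.
  - apply hPair; auto.
  - eapply hComp; eauto.
  - apply hRec0; auto.
  - eapply hRecS; eauto.
  - apply hMu; auto. intros m Hm. destruct (H0 m Hm) as [y [Hy Hev]].
    exists y. split; [exact Hy|]. split; [exact Hev|]. exact (eval_ind2 _ _ _ Hev).
Defined.
End EvalInd.

Ltac pinj := repeat match goal with
  | E : pair _ _ = pair _ _ |- _ => apply pair_inj in E as [? ?]
  | E : S _ = S _ |- _ => injection E as E
  | E : S _ = 0 |- _ => discriminate E
  | E : 0 = S _ |- _ => discriminate E
  end; subst.

Lemma eval_det A c x y1 : eval A c x y1 -> forall y2, eval A c x y2 -> y1 = y2.
Proof.
  intros H. induction H using eval_ind2; intros y2 H2.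
  - inversion H2; auto.
  - inversion H2; auto.
  - inversion H2; subst; pinj; auto.
  - inversion H2; subst; pinj; auto.
  - inversion H2; auto.
  - inversion H2; subst. f_equal; auto.
  - inversion H2; subst. match goal with E : eval A g x _ |- _ => apply IHeval1 in E end; subst; auto.
  - inversion H2; subst; pinj; auto.
  - inversion H2; subst; pinj.
    match goal with E : eval A (CRec f g) (pair x n) _ |- _ => apply IHeval1 in E end; subst; auto.
  - inversion H2 as [| | | | | | | | | f' x' n' Hz Hall]; subst.
    destruct (Nat.lt_trichotomy n y2) as [Hlt|[Heq|Hgt]]; auto.
    + destruct (Hall n Hlt) as [y [Hy Hev]]. apply IHeval in Hev. congruence.
    + match goal with Hf : forall m, m < n -> exists y, _ |- _ => destruct (Hf y2 Hgt) as [y [Hy [Hev IH]]] end. apply IH in Hz. congruence.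
Qed.

Fixpoint encode (c : code) : nat :=
  match c with
  | CZero => S (pair 0 0)
  | CSucc => S (pair 1 0)
  | CP1 => S (pair 2 0)
  | CP2 => S (pair 3 0)
  | COrac => S (pair 4 0)
  | CPair f g => S (pair 5 (pair (encode f) (encode g)))
  | CComp f g => S (pair 6 (pair (encode f) (encode g)))
  | CRec f g => S (pair 7 (pair (encode f) (encode g)))
  | CMu f => S (pair 8 (pair (encode f) 0))
  end.

Lemma decode_fuel_stable fu1 : forall fu2 n, n < fu1 -> n < fu2 -> decode_fuel fu1 n = decode_fuel fu2 n.
Proof.
  induction fu1; intros fu2 n H1 H2; [lia|].
  destruct fu2; [lia|]. simpl. destruct n; [reflexivity|].
  pose proof (pair_unpair n) as E.
  destruct (unpair n) as [t r] eqn:Et. simpl in E.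
  pose proof (pair_unpair r) as E2.
  destruct (unpair r) as [a b] eqn:Er. simpl in E2.
  destruct (pair_ge t r). destruct (pair_ge a b).
  assert (a < fu1) by lia. assert (b < fu1) by lia.
  assert (a < fu2) by lia. assert (b < fu2) by lia.
  repeat rewrite (IHfu1 fu2 a), (IHfu1 fu2 b) by lia. reflexivity.
Qed.

Definition mk (k : nat) (ca cb : code) : code :=
  match k with
  | 0 => CZero | 1 => CSucc | 2 => CP1 | 3 => CP2 | 4 => COrac
  | 5 => CPair ca cb | 6 => CComp ca cb | 7 => CRec ca cb | _ => CMu ca end.

Lemma decode_S t a b : decode (S (pair t (pair a b))) = mk (t mod 9) (decode a) (decode b).
Proof.
  unfold decode. remember (pair t (pair a b)) as n.
  destruct (pair_ge t (pair a b)). destruct (pair_ge a b).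
  change (decode_fuel (S (S n)) (S n)) with
    (let (t, r) := unpair n in let (a, b) := unpair r in
      match t mod 9 with
      | 0 => CZero | 1 => CSucc | 2 => CP1 | 3 => CP2 | 4 => COrac
      | 5 => CPair (decode_fuel (S n) a) (decode_fuel (S n) b)
      | 6 => CComp (decode_fuel (S n) a) (decode_fuel (S n) b)
      | 7 => CRec (decode_fuel (S n) a) (decode_fuel (S n) b)
      | _ => CMu (decode_fuel (S n) a) end).
  rewrite Heqn at 1. rewrite !unpair_pair. cbv beta iota.
  rewrite (decode_fuel_stable (S n) (S a) a) by lia.
  rewrite (decode_fuel_stable (S n) (S b) b) by lia.
  reflexivity.
Qed.

Lemma decode_encode c : decode (encode c) = c.
Proof.
  induction c; simpl encode;
  try (change (pair 0 0) with (pair 0 (pair 0 0)));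
  try (change 0 with (pair 0 0) at 2);
  rewrite ?decode_S; simpl; congruence.
Qed.

Definition scons (v : nat) (r : nat -> nat) : nat -> nat :=
  fun i => match i with 0 => v | S i' => r i' end.

Inductive ex : Type :=
| V (i : nat) | Z | Sc (e : ex) | Pr (e1 e2 : ex) | P1 (e : ex) | P2 (e : ex)
| Or (e : ex) | Let (e1 e2 : ex) | Rec (b s n : ex).

Fixpoint recf (base : nat) (step : nat -> nat -> nat) (k : nat) : nat :=
  match k with 0 => base | S k' => step k' (recf base step k') end.

Fixpoint sem (A : nat -> nat) (e : ex) (r : nat -> nat) : nat :=
  match e with
  | V i => r i
  | Z => 0
  | Sc e => S (sem A e r)
  | Pr a b => pair (sem A a r) (sem A b r)
  | P1 e => fstn (sem A e r)
  | P2 e => sndn (sem A e r)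
  | Or e => A (sem A e r)
  | Let a b => sem A b (scons (sem A a r) r)
  | Rec b s n => recf (sem A b r) (fun k y => sem A s (scons y (scons k r))) (sem A n r)
  end.

Fixpoint cV (i : nat) : code := match i with 0 => CP1 | S i => CComp (cV i) CP2 end.
Definition cid := CPair CP1 CP2.
Fixpoint comp (e : ex) : code :=
  match e with
  | V i => cV i
  | Z => CZero
  | Sc e => CComp CSucc (comp e)
  | Pr a b => CPair (comp a) (comp b)
  | P1 e => CComp CP1 (comp e)
  | P2 e => CComp CP2 (comp e)
  | Or e => CComp COrac (comp e)
  | Let a b => CComp (comp b) (CPair (comp a) cid)
  | Rec b s n => CComp (CRec (comp b)
        (CComp (comp s) (CPair (CComp CP2 CP2) (CPair (CComp CP1 CP2) CP1))))
        (CPair cid (comp n))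
  end.

Fixpoint proj (i c : nat) : nat := match i with 0 => fstn c | S i => proj i (sndn c) end.
Definition envof (c : nat) : nat -> nat := fun i => proj i c.

Lemma ev_P1 A c : eval A CP1 c (fstn c).
Proof. replace c with (pair (fstn c) (sndn c)) at 1 by apply pair_fs. apply eP1. Qed.
Lemma ev_P2 A c : eval A CP2 c (sndn c).
Proof. replace c with (pair (fstn c) (sndn c)) at 1 by apply pair_fs. apply eP2. Qed.
Lemma ev_id A c : eval A cid c c.
Proof. rewrite <- (pair_fs c) at 2. apply ePair; [apply ev_P1|apply ev_P2]. Qed.
Lemma ev_cV A i : forall c, eval A (cV i) c (proj i c).
Proof. induction i; intros c; simpl. apply ev_P1. eapply eComp; [apply ev_P2|apply IHi]. Qed.

Lemma sem_ext A e : forall r r', (forall i, r i = r' i) -> sem A e r = sem A e r'.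
Proof.
  induction e; intros r r' H; simpl; auto;
    try (rewrite (IHe r r'); auto); try (rewrite (IHe1 r r'), (IHe2 r r'); auto).
  - rewrite (IHe1 r r' H). apply IHe2. intros [|i]; simpl; auto.
  - rewrite (IHe1 r r' H), (IHe3 r r' H). generalize (sem A e3 r').
    induction n; simpl; auto. rewrite IHn. apply IHe2. intros [|[|i]]; simpl; auto.
Qed.

Lemma envof_pair v c : forall i, envof (pair v c) i = scons v (envof c) i.
Proof. intros [|i]; unfold envof; simpl; repeat rewrite ?fstn_pair, ?sndn_pair; reflexivity. Qed.

Lemma ev_shuffle A x k y :
  eval A (CPair (CComp CP2 CP2) (CPair (CComp CP1 CP2) CP1)) (pair x (pair k y)) (pair y (pair k x)).
Proof.
  apply ePair.
  - eapply eComp; [apply eP2|apply eP2].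
  - apply ePair; [eapply eComp; [apply eP2|apply eP1]|apply eP1].
Qed.

Theorem comp_correct A e : forall c, eval A (comp e) c (sem A e (envof c)).
Proof.
  induction e; intros c; simpl.
  - apply ev_cV.
  - apply eZero.
  - eapply eComp; [apply IHe|apply eSucc].
  - apply ePair; auto.
  - eapply eComp; [apply IHe|apply ev_P1].
  - eapply eComp; [apply IHe|apply ev_P2].
  - eapply eComp; [apply IHe|apply eOrac].
  - eapply eComp; [apply ePair; [apply IHe1|apply ev_id]|].
    rewrite (sem_ext A e2 _ (envof (pair (sem A e1 (envof c)) c))); [apply IHe2|].
    intros i; symmetry; apply envof_pair.
  - eapply eComp; [apply ePair; [apply ev_id|apply IHe3]|].
    generalize (sem A e3 (envof c)). induction n; simpl.
    + apply eRec0. apply IHe1.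
    + eapply eRecS; [exact IHn|].
      eapply eComp; [apply ev_shuffle|].
      * match goal with |- eval _ _ ?cc _ => rewrite (sem_ext A e2 _ (envof cc)); [apply IHe2|] end.
        intros [|[|i]]; unfold envof; simpl;
          repeat rewrite ?fstn_pair, ?sndn_pair; reflexivity.
Qed.

Fixpoint lift (c d : nat) (e : ex) : ex :=
  match e with
  | V i => if i <? c then V i else V (i + d)
  | Z => Z
  | Sc e => Sc (lift c d e)
  | Pr a b => Pr (lift c d a) (lift c d b)
  | P1 e => P1 (lift c d e)
  | P2 e => P2 (lift c d e)
  | Or e => Or (lift c d e)
  | Let a b => Let (lift c d a) (lift (S c) d b)
  | Rec b s n => Rec (lift c d b) (lift (S (S c)) d s) (lift c d n)
  end.

Lemma sem_lift A e : forall c d r r', (forall i, i < c -> r' i = r i) ->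
  (forall i, c <= i -> r' (i + d) = r i) -> sem A (lift c d e) r' = sem A e r.
Proof.
  induction e; intros c d r r' H1 H2; simpl.
  - destruct (Nat.ltb_spec i c); simpl; auto.
  - auto.
  - erewrite IHe; eauto.
  - erewrite IHe1, IHe2; eauto.
  - erewrite IHe; eauto.
  - erewrite IHe; eauto.
  - erewrite IHe; eauto.
  - erewrite IHe1; eauto. apply IHe2.
    + intros [|i] Hi; simpl; auto. apply H1; lia.
    + intros [|i] Hi; [lia|]. simpl. apply H2. lia.
  - erewrite IHe1, IHe3; eauto. generalize (sem A e3 r).
    induction n; simpl; auto. rewrite IHn. apply IHe2.
    + intros [|[|i]] Hi; simpl; auto. apply H1; lia.
    + intros [|[|i]] Hi; try lia. simpl. apply H2. lia.
Qed.

Lemma sem_lift0 A e d r r' : (forall i, r' (i + d) = r i) -> sem A (lift 0 d e) r' = sem A e r.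
Proof. intros H. apply sem_lift; auto. intros; lia. Qed.

Fixpoint K (k : nat) : ex := match k with 0 => Z | S k => Sc (K k) end.
Definition Add a b := Rec a (Sc (V 0)) b.
Definition Mul a b := Rec Z (Add (V 0) (lift 0 2 a)) b.
Definition Pred a := Rec Z (V 1) a.
Definition Sub a b := Rec a (Pred (V 0)) b.
Definition If0 c t f := Rec t (lift 0 2 f) c.
Definition Eqb a b := Add (Sub a b) (Sub b a).
Definition Not a := If0 a (K 1) Z.
Definition BEx n body := Rec (K 1) (Mul (V 0) (lift 0 1 body)) n.
Definition BAll n body := Rec Z (Add (V 0) (lift 0 1 body)) n.
Definition Pow b n := Rec (K 1) (Mul (V 0) (lift 0 2 b)) n.
Definition IterSnd k e := Rec e (P2 (V 0)) k.

Section Sems.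
Variable A : nat -> nat.
Lemma sK k r : sem A (K k) r = k.
Proof. induction k; simpl; auto. Qed.
Lemma sAdd a b r : sem A (Add a b) r = sem A a r + sem A b r.
Proof. unfold Add. cbn [sem recf scons]. induction (sem A b r); cbn [sem recf scons]; lia. Qed.
Lemma sMul a b r : sem A (Mul a b) r = sem A a r * sem A b r.
Proof.
  unfold Mul. cbn [sem recf scons]. induction (sem A b r); cbn [sem recf scons]; [lia|].
  rewrite sAdd. cbn [sem recf scons]. rewrite IHn. rewrite (sem_lift0 _ _ _ r); [lia|]. intros; rewrite Nat.add_comm; reflexivity.
Qed.
Lemma sPred a r : sem A (Pred a) r = pred (sem A a r).
Proof. unfold Pred. cbn [sem recf scons]. destruct (sem A a r); reflexivity. Qed.
Lemma sSub a b r : sem A (Sub a b) r = sem A a r - sem A b r.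
Proof. unfold Sub. cbn [sem recf scons]. induction (sem A b r); cbn [sem recf scons]; [lia|]. rewrite sPred. cbn [sem recf scons]. rewrite IHn. lia. Qed.
Lemma sIf0 c t f r : sem A (If0 c t f) r = match sem A c r with 0 => sem A t r | S _ => sem A f r end.
Proof.
  unfold If0. cbn [sem recf scons]. destruct (sem A c r); cbn [sem recf scons]; auto. apply sem_lift0. intros; rewrite Nat.add_comm; reflexivity.
Qed.
Lemma sEqb a b r : sem A (Eqb a b) r = 0 <-> sem A a r = sem A b r.
Proof. unfold Eqb. rewrite sAdd, !sSub. lia. Qed.
Lemma sNot a r : sem A (Not a) r = 0 <-> sem A a r <> 0.
Proof. unfold Not. rewrite sIf0. destruct (sem A a r); rewrite ?sK; cbn [sem]; split; intros; try lia; congruence. Qed.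
Lemma sBEx n body r : sem A (BEx n body) r = 0 <-> exists j, j < sem A n r /\ sem A body (scons j r) = 0.
Proof.
  unfold BEx. cbn [sem recf scons]. induction (sem A n r) as [|m IH]; cbn [sem recf scons].
  - rewrite sK. split; [discriminate|]. intros [j [Hj _]]; lia.
  - rewrite sMul. cbn [sem recf scons]. rewrite (sem_lift0 _ _ _ (scons m r)) by (intros i; rewrite Nat.add_comm; reflexivity).
    rewrite Nat.mul_eq_0, IH. split.
    + intros [[j [Hj Hb]]|Hb]; [exists j; split; auto|exists m; split; auto].
    + intros [j [Hj Hb]]. destruct (Nat.eq_dec j m); [subst; right; auto|left; exists j; split; auto; lia].
Qed.
Lemma sBAll n body r : sem A (BAll n body) r = 0 <-> forall j, j < sem A n r -> sem A body (scons j r) = 0.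
Proof.
  unfold BAll. cbn [sem recf scons]. induction (sem A n r) as [|m IH]; cbn [sem recf scons].
  - split; auto. intros; lia.
  - rewrite sAdd. cbn [sem recf scons]. rewrite (sem_lift0 _ _ _ (scons m r)) by (intros i; rewrite Nat.add_comm; reflexivity).
    rewrite Nat.eq_add_0, IH. split.
    + intros [H1 H2] j Hj. destruct (Nat.eq_dec j m); [subst; auto|apply H1; lia].
    + intros H; split; auto.
Qed.
Lemma sPow b n r : sem A (Pow b n) r = sem A b r ^ sem A n r.
Proof.
  unfold Pow. cbn [sem recf scons]. induction (sem A n r) as [|m IH]; cbn [sem recf scons].
  - rewrite sK; reflexivity.
  - rewrite sMul. cbn [sem recf scons]. rewrite IH. rewrite (sem_lift0 _ _ _ r) by (intros i; rewrite Nat.add_comm; reflexivity).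
    rewrite Nat.pow_succ_r'. apply Nat.mul_comm.
Qed.
Lemma sIterSnd k e r : sem A (IterSnd k e) r = Nat.iter (sem A k r) sndn (sem A e r).
Proof. unfold IterSnd. cbn [sem recf scons]. induction (sem A k r); cbn [sem recf scons]; auto. rewrite IHn; reflexivity. Qed.
End Sems.

Definition Aof (o : bool) (A : nat -> nat) : nat -> nat := fun x => if o then A x else 0.

Definition fe n := fstn n.
Definition fx n := fstn (sndn n).
Definition fy n := fstn (sndn (sndn n)).
Definition fz n := sndn (sndn (sndn n)).
Definition mkent e x y z := pair e (pair x (pair y z)).
Lemma mkent_fields e x y z : fe (mkent e x y z) = e /\ fx (mkent e x y z) = x /\
  fy (mkent e x y z) = y /\ fz (mkent e x y z) = z.
Proof. unfold fe, fx, fy, fz, mkent. repeat rewrite ?sndn_pair, ?fstn_pair. auto. Qed.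

Definition dk e := fstn (pred e) mod 9.
Definition da e := fstn (sndn (pred e)).
Definition db e := sndn (sndn (pred e)).

Lemma fstn0 : fstn 0 = 0. Proof. reflexivity. Qed.
Lemma sndn0 : sndn 0 = 0. Proof. reflexivity. Qed.

Lemma decode_gen e : decode e = mk (dk e) (decode (da e)) (decode (db e)).
Proof.
  destruct e as [|m]; [reflexivity|].
  unfold dk, da, db; simpl pred.
  rewrite <- (pair_fs m) at 1. rewrite <- (pair_fs (sndn m)) at 1. apply decode_S.
Qed.

Lemma dk_lt e : dk e < 9.
Proof. unfold dk. apply Nat.mod_upper_bound. lia. Qed.

Section Spec.
Variable o : bool.
Variable A : nat -> nat.
Variable g : nat -> nat.

Definition present (i e x y : nat) : Prop :=
  exists j, j < i /\ fe (g j) = e /\ fx (g j) = x /\ fy (g j) = y.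
Definition presentNZ (i e x : nat) : Prop :=
  exists j, j < i /\ fe (g j) = e /\ fx (g j) = x /\ fy (g j) <> 0.

Definition VEspec (i : nat) : Prop :=
  let n := g i in let e := fe n in let x := fx n in let y := fy n in let z := fz n in
  let k := dk e in let a := da e in let b := db e in
  (k = 0 /\ y = 0) \/ (k = 1 /\ y = S x) \/ (k = 2 /\ y = fstn x) \/ (k = 3 /\ y = sndn x) \/
  (k = 4 /\ y = Aof o A x) \/
  (k = 5 /\ present i a x (fstn y) /\ present i b x (sndn y)) \/
  (k = 6 /\ present i b x z /\ present i a z y) \/
  (k = 7 /\ ((sndn x = 0 /\ present i a (fstn x) y) \/
             (sndn x <> 0 /\ present i e (pair (fstn x) (pred (sndn x))) z /\
              present i b (pair (fstn x) (pair (pred (sndn x)) z)) y))) \/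
  (k = 8 /\ present i a (pair x y) 0 /\ forall m, m < y -> presentNZ i a (pair x m)).

Lemma VE_sound : forall i, (forall j, j <= i -> VEspec j) ->
  eval (Aof o A) (decode (fe (g i))) (fx (g i)) (fy (g i)).
Proof.
  intros i. induction i as [i IH] using lt_wf_ind. intros Hv.
  assert (Hi := Hv i (le_n i)).
  assert (Hp : forall e x y, present i e x y -> eval (Aof o A) (decode e) x y).
  { intros e x y [j [Hj [E1 [E2 E3]]]]. subst. apply IH; auto. intros; apply Hv; lia. }
  assert (Hq : forall e x, presentNZ i e x -> exists y, y <> 0 /\ eval (Aof o A) (decode e) x y).
  { intros e x [j [Hj [E1 [E2 E3]]]]. subst. exists (fy (g j)). split; auto. apply IH; auto. intros; apply Hv; lia. }
  unfold VEspec in Hi. cbv zeta in Hi.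
  rewrite decode_gen.
  destruct Hi as [[Hk Hy]|[[Hk Hy]|[[Hk Hy]|[[Hk Hy]|[[Hk Hy]|[[Hk [H1 H2]]|[[Hk [H1 H2]]|[[Hk H]|[Hk [H1 H2]]]]]]]]]];
    rewrite Hk; simpl mk.
  - rewrite Hy; apply eZero.
  - rewrite Hy; apply eSucc.
  - rewrite Hy. apply ev_P1.
  - rewrite Hy. apply ev_P2.
  - rewrite Hy. apply eOrac.
  - rewrite <- (pair_fs (fy (g i))). apply ePair; auto.
  - eapply eComp; apply Hp; eauto.
  - rewrite <- (pair_fs (fx (g i))). destruct H as [[H0 H1]|[H0 [H1 H2]]].
    + rewrite H0. apply eRec0. auto.
    + destruct (sndn (fx (g i))) as [|n] eqn:En; [lia|]. simpl pred in *.
      eapply eRecS.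
      * apply Hp in H1. rewrite decode_gen, Hk in H1. exact H1.
      * apply Hp; exact H2.
  - apply eMu; auto.
Qed.

End Spec.

Definition VEL o A (L : list nat) i := VEspec o A (fun j => nth j L 0) i.
Definition validL o A (L : list nat) := forall i, i < length L -> VEL o A L i.
Definition hasL (L : list nat) e x y :=
  exists j, j < length L /\ fe (nth j L 0) = e /\ fx (nth j L 0) = x /\ fy (nth j L 0) = y.

Lemma VE_transfer o A g g' i i' :
  g' i' = g i ->
  (forall e x y, present g i e x y -> present g' i' e x y) ->
  (forall e x, presentNZ g i e x -> presentNZ g' i' e x) ->
  VEspec o A g i -> VEspec o A g' i'.
Proof.
  intros Eg Hp Hq H. unfold VEspec in *. rewrite Eg.
  cbv zeta in *. intuition auto.
Qed.

Definition hasNZL (L : list nat) e x :=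
  exists j, j < length L /\ fe (nth j L 0) = e /\ fx (nth j L 0) = x /\ fy (nth j L 0) <> 0.

Lemma hasL_app_l L1 L2 e x y : hasL L1 e x y -> hasL (L1 ++ L2) e x y.
Proof.
  intros [j [Hj H]]. exists j. rewrite app_nth1 by lia. rewrite length_app. split; [lia|auto].
Qed.
Lemma hasL_app_r L1 L2 e x y : hasL L2 e x y -> hasL (L1 ++ L2) e x y.
Proof.
  intros [j [Hj H]]. exists (length L1 + j). rewrite app_nth2_plus. rewrite length_app. split; [lia|auto].
Qed.
Lemma hasNZL_app_l L1 L2 e x : hasNZL L1 e x -> hasNZL (L1 ++ L2) e x.
Proof.
  intros [j [Hj H]]. exists j. rewrite app_nth1 by lia. rewrite length_app. split; [lia|auto].
Qed.
Lemma hasNZL_app_r L1 L2 e x : hasNZL L2 e x -> hasNZL (L1 ++ L2) e x.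
Proof.
  intros [j [Hj H]]. exists (length L1 + j). rewrite app_nth2_plus. rewrite length_app. split; [lia|auto].
Qed.

Lemma validL_app o A L1 L2 : validL o A L1 -> validL o A L2 -> validL o A (L1 ++ L2).
Proof.
  intros H1 H2 i Hi. rewrite length_app in Hi. unfold VEL.
  destruct (Nat.lt_ge_cases i (length L1)) as [Hl|Hl].
  - apply (VE_transfer o A (fun j => nth j L1 0) _ i i).
    + apply app_nth1; auto.
    + intros e x y [j [Hj Hp]]. exists j. rewrite app_nth1 by lia. auto.
    + intros e x [j [Hj Hp]]. exists j. rewrite app_nth1 by lia. auto.
    + apply H1; auto.
  - replace i with (length L1 + (i - length L1)) by lia.
    apply (VE_transfer o A (fun j => nth j L2 0) _ (i - length L1)).
    + apply app_nth2_plus.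
    + intros e x y [j [Hj Hp]]. exists (length L1 + j). rewrite app_nth2_plus. split; [lia|auto].
    + intros e x [j [Hj Hp]]. exists (length L1 + j). rewrite app_nth2_plus. split; [lia|auto].
    + apply H2; lia.
Qed.

Lemma present_of_has L n e x y : hasL L e x y -> present (fun j => nth j (L ++ [n]) 0) (length L) e x y.
Proof. intros [j [Hj Hp]]. exists j. rewrite app_nth1 by lia. auto. Qed.
Lemma presentNZ_of_has L n e x : hasNZL L e x -> presentNZ (fun j => nth j (L ++ [n]) 0) (length L) e x.
Proof. intros [j [Hj Hp]]. exists j. rewrite app_nth1 by lia. auto. Qed.

Lemma validL_snoc o A L e x y z :
  validL o A L -> VEspec o A (fun j => nth j (L ++ [mkent e x y z]) 0) (length L) ->
  validL o A (L ++ [mkent e x y z]) /\ hasL (L ++ [mkent e x y z]) e x y.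
Proof.
  intros HL Hn. split.
  - intros i Hi. rewrite length_app in Hi; simpl in Hi. unfold VEL.
    destruct (Nat.lt_ge_cases i (length L)) as [Hl|Hl].
    + apply (VE_transfer o A (fun j => nth j L 0) _ i i).
      * apply app_nth1; auto.
      * intros e' x' y' [j [Hj Hp]]. exists j. rewrite app_nth1 by lia. auto.
      * intros e' x' [j [Hj Hp]]. exists j. rewrite app_nth1 by lia. auto.
      * apply HL; auto.
    + replace i with (length L) by lia. exact Hn.
  - exists (length L). rewrite length_app. simpl. rewrite app_nth2 by lia. rewrite Nat.sub_diag. simpl.
    pose proof (mkent_fields e x y z). intuition lia.
Qed.

Lemma new_fields L n : nth (length L) (L ++ [n]) 0 = n.
Proof. rewrite app_nth2 by lia. rewrite Nat.sub_diag. reflexivity. Qed.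

Lemma collect o A N (P : list nat -> nat -> Prop) :
  (forall L1 L2 m, P L1 m -> P (L1 ++ L2) m) -> (forall L1 L2 m, P L2 m -> P (L1 ++ L2) m) ->
  (forall m, m < N -> exists L, validL o A L /\ P L m) ->
  exists L, validL o A L /\ forall m, m < N -> P L m.
Proof.
  intros Hl Hr. induction N; intros H.
  - exists []. split; [intros i Hi; simpl in Hi; lia|intros; lia].
  - destruct IHN as [L1 [V1 P1']]. { intros; apply H; lia. }
    destruct (H N) as [L2 [V2 P2']]; [lia|].
    exists (L1 ++ L2). split; [apply validL_app; auto|].
    intros m Hm. destruct (Nat.eq_dec m N); [subst; auto|apply Hl, P1'; lia].
Qed.

Lemma mk_cases k ca cb : k < 9 ->
  (k = 0 /\ mk k ca cb = CZero) \/ (k = 1 /\ mk k ca cb = CSucc) \/ (k = 2 /\ mk k ca cb = CP1) \/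
  (k = 3 /\ mk k ca cb = CP2) \/ (k = 4 /\ mk k ca cb = COrac) \/ (k = 5 /\ mk k ca cb = CPair ca cb) \/
  (k = 6 /\ mk k ca cb = CComp ca cb) \/ (k = 7 /\ mk k ca cb = CRec ca cb) \/ (k = 8 /\ mk k ca cb = CMu ca).
Proof. intros H. do 9 (destruct k as [|k]; [simpl; tauto|]). lia. Qed.

Ltac decinv He e :=
  rewrite decode_gen in He;
  let Hk := fresh "Hk" in
  destruct (mk_cases (dk e) (decode (da e)) (decode (db e)) (dk_lt e)) as
    [[Hk E]|[[Hk E]|[[Hk E]|[[Hk E]|[[Hk E]|[[Hk E]|[[Hk E]|[[Hk E]|[Hk E]]]]]]]]];
  rewrite E in He; try discriminate He; try (injection He as Ha Hb); try (injection He as Ha).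

Lemma fe_mk e x y z : fe (mkent e x y z) = e. Proof. apply mkent_fields. Qed.
Lemma fx_mk e x y z : fx (mkent e x y z) = x. Proof. apply mkent_fields. Qed.
Lemma fy_mk e x y z : fy (mkent e x y z) = y. Proof. apply mkent_fields. Qed.
Lemma fz_mk e x y z : fz (mkent e x y z) = z. Proof. apply mkent_fields. Qed.

Ltac snoc L e x y z :=
  exists (L ++ [mkent e x y z]); apply validL_snoc;
  [|unfold VEspec; cbv beta zeta; rewrite (new_fields L (mkent e x y z)), fe_mk, fx_mk, fy_mk, fz_mk].

Theorem derivations_complete o A c x y : eval (Aof o A) c x y ->
  forall e, decode e = c -> exists L, validL o A L /\ hasL L e x y.
Proof.
  intros H. induction H using eval_ind2; intros e He; pose proof He as He0; decinv He e.
  - snoc (@nil nat) e x 0 0; [intros i Hi; simpl in Hi; lia|]. left; auto.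
  - snoc (@nil nat) e x (S x) 0; [intros i Hi; simpl in Hi; lia|]. right; left; auto.
  - snoc (@nil nat) e (pair x y) x 0; [intros i Hi; simpl in Hi; lia|]. do 2 right; left. rewrite fstn_pair; auto.
  - snoc (@nil nat) e (pair x y) y 0; [intros i Hi; simpl in Hi; lia|]. do 3 right; left. rewrite sndn_pair; auto.
  - snoc (@nil nat) e x (Aof o A x) 0; [intros i Hi; simpl in Hi; lia|]. do 4 right; left. auto.
  - destruct (IHeval1 _ Ha) as [L1 [V1 H1]]. destruct (IHeval2 _ Hb) as [L2 [V2 H2]].
    snoc (L1 ++ L2) e x (pair y z) 0; [apply validL_app; auto|].
    do 5 right; left. rewrite fstn_pair, sndn_pair. split; auto.
    split; apply present_of_has; [apply hasL_app_l|apply hasL_app_r]; auto.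
  - destruct (IHeval1 _ Hb) as [L1 [V1 H1]]. destruct (IHeval2 _ Ha) as [L2 [V2 H2]].
    snoc (L1 ++ L2) e x z y; [apply validL_app; auto|].
    do 6 right; left. split; auto.
    split; apply present_of_has; [apply hasL_app_l|apply hasL_app_r]; auto.
  - destruct (IHeval _ Ha) as [L1 [V1 H1]].
    snoc L1 e (pair x 0) y 0; [assumption|].
    do 7 right; left. split; auto. left. rewrite sndn_pair, fstn_pair. split; auto.
    apply present_of_has; auto.
  - destruct (IHeval1 _ He0) as [L1 [V1 H1]]. destruct (IHeval2 _ Hb) as [L2 [V2 H2]].
    snoc (L1 ++ L2) e (pair x (S n)) z y; [apply validL_app; auto|].
    do 7 right; left. split; auto. right. rewrite sndn_pair, fstn_pair. simpl pred.
    split; [lia|]. split; apply present_of_has; [apply hasL_app_l|apply hasL_app_r]; auto.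
  - destruct (IHeval _ Ha) as [L1 [V1 H1]].
    destruct (collect o A n (fun L m => hasNZL L (da e) (pair x m))) as [L2 [V2 H2]].
    { intros; apply hasNZL_app_l; auto. }
    { intros; apply hasNZL_app_r; auto. }
    { intros m Hm. destruct (H0 m Hm) as [y' [Hy' [Hev IH]]].
      destruct (IH _ Ha) as [L [VL HL]]. exists L. split; auto.
      destruct HL as [j [Hj [F1 [F2 F3]]]]. exists j. split; auto. split; auto. split; auto. congruence. }
    snoc (L1 ++ L2) e x n 0; [apply validL_app; auto|].
    do 8 right. split; auto. split.
    + apply present_of_has; apply hasL_app_l; auto.
    + intros m Hm. apply presentNZ_of_has. apply hasNZL_app_r; auto.
Qed.

Fixpoint lcode (L : list nat) : nat := match L with [] => 0 | a :: L => pair a (lcode L) end.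
Definition entn l j := fstn (Nat.iter j sndn l).

Lemma iter_sndn0 j : Nat.iter j sndn 0 = 0.
Proof. induction j; simpl; auto. rewrite IHj; reflexivity. Qed.

Lemma entn_lcode L : forall j, entn (lcode L) j = nth j L 0.
Proof.
  unfold entn. induction L; intros j; simpl.
  - rewrite iter_sndn0. destruct j; reflexivity.
  - destruct j; simpl. apply fstn_pair. rewrite <- IHL. f_equal. rewrite <- Nat.iter_succ. rewrite Nat.iter_succ_r. rewrite sndn_pair. reflexivity.
Qed.

Definition validW o A w := forall i, i < fstn w -> VEspec o A (entn (sndn w)) i.
Definition hasW w e x y := present (entn (sndn w)) (fstn w) e x y.

Theorem W_sound o A w e x y : validW o A w -> hasW w e x y -> eval (Aof o A) (decode e) x y.
Proof.
  intros HV [j [Hj [E1 [E2 E3]]]]. subst. apply VE_sound. intros; apply HV; lia.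
Qed.

Theorem W_complete o A e x y : eval (Aof o A) (decode e) x y -> exists w, validW o A w /\ hasW w e x y.
Proof.
  intros H. destruct (derivations_complete o A _ _ _ H e eq_refl) as [L [HV HL]].
  exists (pair (length L) (lcode L)). unfold validW, hasW. rewrite fstn_pair, sndn_pair. split.
  - intros i Hi. apply (VE_transfer o A (fun j => nth j L 0) _ i i).
    + apply entn_lcode.
    + intros e' x' y' [j [Hj Hp]]. exists j. rewrite entn_lcode. auto.
    + intros e' x' [j [Hj Hp]]. exists j. rewrite entn_lcode. auto.
    + apply HV; auto.
  - destruct HL as [j [Hj Hp]]. exists j. rewrite entn_lcode. auto.
Qed.

Definition And a b := Add a b.
Definition OrE a b := Mul a b.
Definition Ent l j := P1 (IterSnd j l).
Definition Fe n := P1 n.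
Definition Fx n := P1 (P2 n).
Definition Fy n := P1 (P2 (P2 n)).
Definition Fz n := P2 (P2 (P2 n)).
Definition PresentM bound l e x y :=
  BEx bound (Let (Ent (lift 0 1 l) (V 0))
    (And (Eqb (Fe (V 0)) (lift 0 2 e)) (And (Eqb (Fx (V 0)) (lift 0 2 x)) (Eqb (Fy (V 0)) (lift 0 2 y))))).
Definition PresentNZM bound l e x :=
  BEx bound (Let (Ent (lift 0 1 l) (V 0))
    (And (Eqb (Fe (V 0)) (lift 0 2 e)) (And (Eqb (Fx (V 0)) (lift 0 2 x)) (Not (Fy (V 0)))))).
Definition Mod9 e := Rec Z (If0 (Eqb (V 0) (K 8)) Z (Sc (V 0))) e.

Section S4.
Variable A : nat -> nat.

Lemma sAnd a b r : sem A (And a b) r = 0 <-> sem A a r = 0 /\ sem A b r = 0.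
Proof. unfold And. rewrite sAdd. lia. Qed.
Lemma sOrE a b r : sem A (OrE a b) r = 0 <-> sem A a r = 0 \/ sem A b r = 0.
Proof. unfold OrE. rewrite sMul. lia. Qed.
Lemma sEnt l j r : sem A (Ent l j) r = entn (sem A l r) (sem A j r).
Proof. unfold Ent, entn. cbn [sem]. rewrite sIterSnd. reflexivity. Qed.

Lemma lift1 e v r : sem A (lift 0 1 e) (scons v r) = sem A e r.
Proof. apply sem_lift0. intros i; rewrite Nat.add_1_r; reflexivity. Qed.
Lemma lift2 e v w r : sem A (lift 0 2 e) (scons v (scons w r)) = sem A e r.
Proof. apply sem_lift0. intros i; rewrite Nat.add_comm; reflexivity. Qed.

Lemma sPresentM b l e x y r : sem A (PresentM b l e x y) r = 0 <->
  present (entn (sem A l r)) (sem A b r) (sem A e r) (sem A x r) (sem A y r).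
Proof.
  unfold PresentM, present. rewrite sBEx. cbn [sem].
  split; intros [j [Hj H]]; exists j; split; auto;
  revert H; rewrite !sAnd, !sEqb; unfold Fe, Fx, Fy, fe, fx, fy; cbn [sem scons];
  rewrite sEnt, !lift2; cbn [sem scons]; rewrite lift1; auto.
Qed.

Lemma sPresentNZM b l e x r : sem A (PresentNZM b l e x) r = 0 <->
  presentNZ (entn (sem A l r)) (sem A b r) (sem A e r) (sem A x r).
Proof.
  unfold PresentNZM, presentNZ. rewrite sBEx. cbn [sem].
  split; intros [j [Hj H]]; exists j; split; auto;
  revert H; rewrite !sAnd, !sEqb, sNot; unfold Fe, Fx, Fy, fe, fx, fy; cbn [sem scons];
  rewrite sEnt, !lift2; cbn [sem scons]; rewrite lift1; auto.
Qed.

Lemma mod9_step n : S n mod 9 = if n mod 9 =? 8 then 0 else S (n mod 9).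
Proof.
  replace (S n) with (n + 1) by lia. rewrite Nat.Div0.add_mod. change (1 mod 9) with 1.
  pose proof (Nat.mod_upper_bound n 9 ltac:(lia)).
  destruct (n mod 9 =? 8) eqn:E.
  - apply Nat.eqb_eq in E. rewrite E. reflexivity.
  - apply Nat.eqb_neq in E. rewrite Nat.mod_small by lia. lia.
Qed.

Lemma sMod9 e r : sem A (Mod9 e) r = sem A e r mod 9.
Proof.
  unfold Mod9. cbn [sem]. induction (sem A e r) as [|n IH]; [reflexivity|].
  cbn [recf]. rewrite IH, sIf0, mod9_step.
  destruct (n mod 9 =? 8) eqn:E.
  - apply Nat.eqb_eq in E. assert (sem A (Eqb (V 0) (K 8)) (scons (n mod 9) (scons n r)) = 0) as ->.
    { apply sEqb. rewrite sK. cbn [sem scons]. lia. } reflexivity.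
  - apply Nat.eqb_neq in E. destruct (sem A (Eqb (V 0) (K 8)) (scons (n mod 9) (scons n r))) eqn:E2.
    + apply sEqb in E2. rewrite sK in E2. cbn [sem scons] in E2. lia.
    + reflexivity.
Qed.
End S4.

(* env: V0 = i, V1 = w *)
Definition VEbody (o : bool) : ex :=
  (* k0 b1 a2 m3 z4 y5 x6 e7 ent8 i9 w10 *)
  let k := V 0 in let b := V 1 in let a := V 2 in let z := V 4 in let y := V 5 in
  let x := V 6 in let e := V 7 in let I := V 9 in let L := P2 (V 10) in
  let Pres u v w := PresentM I L u v w in
  OrE (And (Eqb k (K 0)) (Eqb y Z))
 (OrE (And (Eqb k (K 1)) (Eqb y (Sc x)))
 (OrE (And (Eqb k (K 2)) (Eqb y (P1 x)))
 (OrE (And (Eqb k (K 3)) (Eqb y (P2 x)))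
 (OrE (And (Eqb k (K 4)) (Eqb y (if o then Or x else Z)))
 (OrE (And (Eqb k (K 5)) (And (Pres a x (P1 y)) (Pres b x (P2 y))))
 (OrE (And (Eqb k (K 6)) (And (Pres b x z) (Pres a z y)))
 (OrE (And (Eqb k (K 7)) (OrE (And (Eqb (P2 x) Z) (Pres a (P1 x) y))
          (And (Not (P2 x)) (And (Pres e (Pr (P1 x) (Pred (P2 x))) z)
                                 (Pres b (Pr (P1 x) (Pr (Pred (P2 x)) z)) y)))))
      (And (Eqb k (K 8)) (And (Pres a (Pr x y) Z)
            (BAll y (PresentNZM (V 10) (P2 (V 11)) (V 3) (Pr (V 7) (V 0))))))))))))).

Definition VE (o : bool) : ex :=
  Let (Ent (P2 (V 1)) (V 0)) (Let (Fe (V 0)) (Let (Fx (V 1)) (Let (Fy (V 2)) (Let (Fz (V 3))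
  (Let (Pred (V 3)) (Let (P1 (P2 (V 0))) (Let (P2 (P2 (V 1))) (Let (Mod9 (P1 (V 2)))
  (VEbody o))))))))).

Lemma sVE A o i w r : sem A (VE o) (scons i (scons w r)) = 0 <-> VEspec o A (entn (sndn w)) i.
Proof.
  unfold VE. cbn [sem]. unfold Fe, Fx, Fy, Fz. cbn [sem scons]. rewrite sEnt, sPred, sMod9.
  cbn [sem scons].
  unfold VEbody. cbv zeta.
  do 3 (rewrite ?sOrE, ?sAnd, ?sEqb, ?sPresentM, ?sNot, ?sBAll, ?sK, ?sPred; cbn [sem scons]).
  setoid_rewrite sPresentNZM. cbn [sem scons].
  unfold VEspec, dk, da, db, fe, fx, fy, fz, Aof. cbv zeta.
  destruct o; cbn [sem scons]; reflexivity.
Qed.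

Definition ValidOf o we := Let we (BAll (P1 (V 0)) (VE o)).
Definition HasOf we ee xe ye := PresentM (P1 we) (P2 we) ee xe ye.

Lemma sValidOf A o we r : sem A (ValidOf o we) r = 0 <-> validW o A (sem A we r).
Proof.
  unfold ValidOf, validW. cbn [sem]. rewrite sBAll. cbn [sem scons].
  split; intros H i Hi; [apply (sVE A o i _ r)|apply (sVE A o i _ r)]; apply H; auto.
Qed.

Lemma sHasOf A we ee xe ye r : sem A (HasOf we ee xe ye) r = 0 <->
  hasW (sem A we r) (sem A ee r) (sem A xe r) (sem A ye r).
Proof. unfold HasOf, hasW. rewrite sPresentM. cbn [sem]. reflexivity. Qed.

Definition Yx x := Eqb (Or (Pr Z x)) Z.
Definition NYx x := Not (Or (Pr Z x)).
Definition Lx x y := Eqb (Or (Pr (K 1) (Pr x y))) Z.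
Definition NLx x y := Not (Or (Pr (K 1) (Pr x y))).
Definition P35 e := Mul (K 3) (Pow (K 5) e).

(* env after two Lets: p0 t1 n2 m3 *)
Definition C3 :=
  Let (P1 (V 0)) (Let (P2 (V 1)) (Let (Or (Pr (K 2) (V 1))) (Let (P2 (V 0))
  (* D0 W1 q2 e3 *)
  (OrE (Yx (P35 (V 3)))
   (OrE (And (Eqb (P1 (V 1)) Z)
             (Not (And (ValidOf false (P1 (V 2))) (HasOf (P1 (V 2)) (V 3) (V 0) (P2 (V 2))))))
        (And (Eqb (P1 (V 1)) (K 1))
           (And (ValidOf false (P1 (P2 (P2 (P2 (V 0))))))
           (And (HasOf (P1 (P2 (P2 (P2 (V 0))))) (V 3) (P1 (V 0)) (P1 (P2 (V 0))))
           (And (ValidOf false (P2 (P2 (P2 (P2 (V 0))))))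
           (And (HasOf (P2 (P2 (P2 (P2 (V 0))))) (V 3) (Sc (P1 (V 0))) (P1 (P2 (P2 (V 0)))))
                (NLx (P1 (P2 (V 0))) (P1 (P2 (P2 (V 0))))))))))))))).

Definition C6 :=
  let p := V 0 in
  let b := P1 p in let e := P1 (P2 p) in let n' := P1 (P2 (P2 p)) in
  let y := P1 (P2 (P2 (P2 p))) in let s := P2 (P2 (P2 (P2 p))) in
  OrE (NYx (P35 e)) (OrE (Not (And (ValidOf false s) (HasOf s e n' y))) (OrE (NLx b y) (Lx b (P35 e)))).

Definition VER :=
  Let (P1 (V 1)) (Let (P2 (V 2))
  (let p := V 0 in let t := V 1 in let n := V 2 in
   OrE (And (Eqb t (K 0)) (NYx n))
  (OrE (And (Eqb t (K 1)) (Yx (K 1)))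
  (OrE (And (Eqb t (K 2)) (OrE (NYx p) (Yx (Pow (K 2) p))))
  (OrE (And (Eqb t (K 3)) C3)
  (OrE (And (Eqb t (K 4)) (OrE (NYx p) (Lx p (Pow (K 2) p))))
  (OrE (And (Eqb t (K 5)) (OrE (NLx (P1 p) (P2 p)) (Lx (P1 p) (Pow (K 2) (P2 p)))))
  (OrE (And (Eqb t (K 6)) C6)
       (Eqb (Sub (K 6) (Pred t)) Z))))))))).

Section Spec.
Variable f : nat -> nat.
Definition Yf x := f (pair 0 x) = 0.
Definition Lf x y := f (pair 1 (pair x y)) = 0.

Definition CheckA (n m : nat) : Prop :=
  let t := fstn m in let p := sndn m in
  (t = 0 /\ ~ Yf n) \/
  (t = 1 /\ Yf 1) \/
  (t = 2 /\ (~ Yf p \/ Yf (2 ^ p))) \/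
  (t = 3 /\ (let e := fstn p in let q := sndn p in let W := f (pair 2 e) in let D := sndn W in
     Yf (3 * 5 ^ e) \/
     (fstn W = 0 /\ ~ (validW false f (fstn q) /\ hasW (fstn q) e D (sndn q))) \/
     (fstn W = 1 /\ validW false f (fstn (sndn (sndn (sndn D)))) /\
        hasW (fstn (sndn (sndn (sndn D)))) e (fstn D) (fstn (sndn D)) /\
        validW false f (sndn (sndn (sndn (sndn D)))) /\
        hasW (sndn (sndn (sndn (sndn D)))) e (S (fstn D)) (fstn (sndn (sndn D))) /\
        ~ Lf (fstn (sndn D)) (fstn (sndn (sndn D)))))) \/
  (t = 4 /\ (~ Yf p \/ Lf p (2 ^ p))) \/
  (t = 5 /\ (~ Lf (fstn p) (sndn p) \/ Lf (fstn p) (2 ^ sndn p))) \/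
  (t = 6 /\ (let b := fstn p in let e := fstn (sndn p) in let n' := fstn (sndn (sndn p)) in
     let y := fstn (sndn (sndn (sndn p))) in let s := sndn (sndn (sndn (sndn p))) in
     ~ Yf (3 * 5 ^ e) \/ ~ (validW false f s /\ hasW s e n' y) \/ ~ Lf b y \/ Lf b (3 * 5 ^ e))) \/
  (6 - pred t = 0).
End Spec.

Lemma sVER f n m r : sem f VER (scons n (scons m r)) = 0 <-> CheckA f n m.
Proof.
  unfold VER, C3, C6, Yx, NYx, Lx, NLx, P35. cbn [sem scons]. cbv zeta.
  do 6 (rewrite ?sOrE, ?sAnd, ?sEqb, ?sNot, ?sK, ?sPred, ?sPow, ?sSub, ?sValidOf, ?sHasOf; cbn [sem scons]).
  rewrite ?sMul, ?sPow, ?sK; cbn [sem scons].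
  unfold CheckA, Yf, Lf. cbv zeta. reflexivity.
Qed.


Scheme inO_mut := Induction for inO Sort Prop
with ltO_mut := Induction for ltO Sort Prop.

Ltac chkcase H :=
  unfold CheckA in H; rewrite fstn_pair, sndn_pair in H; cbv zeta in H;
  destruct H as [[? H]|[[? H]|[[? H]|[[? H]|[[? H]|[[? H]|[[? H]|H]]]]]]];
  try discriminate; try (simpl in H; discriminate); auto.

Lemma phi_eval e x y : phi e x y <-> eval (Aof false (fun _ => 0)) (decode e) x y.
Proof. reflexivity. Qed.

Lemma A_sound f n : (forall m, CheckA f n m) -> ~ inO n.
Proof.
  intros H.
  assert (HY : forall x, inO x -> Yf f x).
  { intros x Hx.
    apply (inO_mut (fun x _ => Yf f x) (fun b a _ => Lf f b a)); auto; clear x Hx.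
    - specialize (H (pair 1 0)). chkcase H.
    - intros a _ IH. specialize (H (pair 2 a)). chkcase H. destruct H; tauto.
    - intros e Htot _ IH.
      destruct (Nat.eq_dec (f (pair 0 (3 * 5 ^ e))) 0) as [ok|bad]; [exact ok|].
      pose proof (H (pair 3 (pair e 0))) as H0. chkcase H0. rewrite fstn_pair in H0.
      destruct H0 as [H0|[[HW0 _]|[HW1 [V1 [Hd1 [V2 [Hd2 HL]]]]]]]; [contradiction| |].
      + destruct (Htot (sndn (f (pair 2 e)))) as [y' Hy'].
        destruct (W_complete false (fun _ => 0) e _ _ Hy') as [s [Vs Hs]].
        specialize (H (pair 3 (pair e (pair s y')))). chkcase H.
        repeat rewrite ?fstn_pair, ?sndn_pair in H.
        destruct H as [H|[[_ H]|[H _]]]; [contradiction| |congruence].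
        exfalso; apply H. split; auto.
      + apply (W_sound false f) in Hd1; [|exact V1]. apply (W_sound false f) in Hd2; [|exact V2].
        exfalso. apply HL. eapply IH; [exact Hd1|exact Hd2].
    - intros a _ IH. specialize (H (pair 4 a)). chkcase H. destruct H; tauto.
    - intros b a _ IH. specialize (H (pair 5 (pair b a))). chkcase H.
      rewrite fstn_pair, sndn_pair in H. destruct H; tauto.
    - intros b e n' y _ IHi Hp _ IHl.
      destruct (W_complete false (fun _ => 0) e _ _ Hp) as [s [Vs Hs]].
      specialize (H (pair 6 (pair b (pair e (pair n' (pair y s)))))). chkcase H.
      repeat rewrite ?fstn_pair, ?sndn_pair in H.
      destruct H as [H|[H|[H|H]]]; try tauto. }
  intros Hn. specialize (H (pair 0 0)). chkcase H.
Qed.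

Definition bdec (P : Prop) : nat := if excluded_middle_informative P then 0 else 1.
Lemma bdec0 P : bdec P = 0 <-> P.
Proof. unfold bdec. destruct (excluded_middle_informative P); split; auto; try discriminate; tauto. Qed.

Definition GoodW (e W : nat) : Prop :=
  let D := sndn W in
  (fstn W = 0 /\ forall y, ~ phi e D y) \/
  (fstn W = 1 /\ validW false (fun _ => 0) (fstn (sndn (sndn (sndn D)))) /\
        hasW (fstn (sndn (sndn (sndn D)))) e (fstn D) (fstn (sndn D)) /\
        validW false (fun _ => 0) (sndn (sndn (sndn (sndn D)))) /\
        hasW (sndn (sndn (sndn (sndn D)))) e (S (fstn D)) (fstn (sndn (sndn D))) /\
        ~ ltO (fstn (sndn D)) (fstn (sndn (sndn D)))).

Lemma GoodW_ex e : ~ inO (3 * 5 ^ e) -> exists W, GoodW e W.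
Proof.
  intros HnO. unfold GoodW.
  destruct (classic (exists k, forall y, ~ phi e k y)) as [[k Hk]|Hall].
  - exists (pair 0 k). left. rewrite fstn_pair, sndn_pair. auto.
  - assert (Htot : forall k, exists y, phi e k y).
    { intros k. apply NNPP. intros Hn. apply Hall. exists k. intros y Hy. apply Hn. eauto. }
    assert (Hbad : exists k y z, phi e k y /\ phi e (S k) z /\ ~ ltO y z).
    { apply NNPP. intros Hn. apply HnO. apply O_lim; auto.
      intros k y z H1 H2. apply NNPP. intros H3. apply Hn. eauto 6. }
    destruct Hbad as [k [y [z [H1 [H2 H3]]]]].
    destruct (W_complete false (fun _ => 0) e _ _ H1) as [s1 [V1 Hs1]].
    destruct (W_complete false (fun _ => 0) e _ _ H2) as [s2 [V2 Hs2]].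
    exists (pair 1 (pair k (pair y (pair z (pair s1 s2))))). right.
    repeat rewrite ?fstn_pair, ?sndn_pair. auto 10.
Qed.

Definition Wf (e : nat) : nat :=
  match excluded_middle_informative (exists W, GoodW e W) with
  | left H => proj1_sig (constructive_indefinite_description _ H)
  | right _ => 0
  end.

Lemma Wf_good e : ~ inO (3 * 5 ^ e) -> GoodW e (Wf e).
Proof.
  intros H. unfold Wf. destruct (excluded_middle_informative _) as [H'|H'].
  - apply proj2_sig.
  - exfalso. apply H', GoodW_ex, H.
Qed.

Definition fO (m : nat) : nat :=
  match fstn m with
  | 0 => bdec (inO (sndn m))
  | 1 => bdec (ltO (fstn (sndn m)) (sndn (sndn m)))
  | 2 => Wf (sndn m)
  | _ => 0
  end.

Lemma fO_Y x : Yf fO x <-> inO x.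
Proof. unfold Yf, fO. rewrite fstn_pair, sndn_pair. apply bdec0. Qed.
Lemma fO_L x y : Lf fO x y <-> ltO x y.
Proof. unfold Lf, fO. repeat rewrite ?fstn_pair, ?sndn_pair. apply bdec0. Qed.
Lemma fO_W e : fO (pair 2 e) = Wf e.
Proof. unfold fO. rewrite fstn_pair, sndn_pair. reflexivity. Qed.

Lemma A_complete n : ~ inO n -> forall m, CheckA fO n m.
Proof.
  intros Hn m. unfold CheckA. cbv zeta. rewrite !fO_Y, !fO_L, fO_W.
  destruct (fstn m) as [|[|[|[|[|[|[|t]]]]]]] eqn:Et.
  - left. split; auto.
  - right; left. split; auto. apply O_one.
  - do 2 right; left. split; auto.
    destruct (classic (inO (sndn m))); [right; apply O_succ|left]; auto.
  - do 3 right; left. split; auto.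
    destruct (classic (inO (3 * 5 ^ fstn (sndn m)))) as [Hi|Hi]; [left; auto|right].
    pose proof (Wf_good _ Hi) as G. unfold GoodW in G. cbv zeta in G.
    destruct G as [[G0 G]|[G1 G]]; [left|right]; split; auto.
    + intros [V Hh]. apply (G (sndn (sndn (sndn m)))).
      exact (W_sound false fO _ _ _ _ V Hh).
  - do 4 right; left. split; auto.
    destruct (classic (inO (sndn m))); [right; apply lt_succ|left]; auto.
  - do 5 right; left. split; auto.
    destruct (classic (ltO (fstn (sndn m)) (sndn (sndn m)))); [right; apply lt_succ_trans|left]; auto.
  - do 6 right; left. split; auto.
    destruct (classic (inO (3 * 5 ^ fstn (sndn (sndn m))))) as [Hi|Hi]; [|left; auto].
    destruct (classic (validW false fO (sndn (sndn (sndn (sndn (sndn m))))) /\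
      hasW (sndn (sndn (sndn (sndn (sndn m))))) (fstn (sndn (sndn m))) (fstn (sndn (sndn (sndn m))))
        (fstn (sndn (sndn (sndn (sndn m))))))) as [[V Hh]|Hv]; [|right; left; auto].
    destruct (classic (ltO (fstn (sndn m)) (fstn (sndn (sndn (sndn (sndn m))))))) as [Hl|Hl]; [|do 2 right; left; auto].
    do 3 right. eapply lt_lim; eauto. exact (W_sound false fO _ _ _ _ V Hh).
  - do 7 right. simpl. lia.
Qed.

Theorem notO_Sigma11_spec n : ~ inO n <-> exists f, forall m, CheckA f n m.
Proof.
  split.
  - intros H. exists fO. apply A_complete, H.
  - intros [f H]. apply (A_sound f), H.
Qed.

Definition Tail k l := Rec l (P2 (Pred (V 0))) k.
Definition Elem i l := P1 (Pred (Tail i l)).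
Definition tailf k l := Nat.iter k (fun x => sndn (pred x)) l.
Definition elemf i l := fstn (pred (tailf i l)).

Lemma sTail A k l r : sem A (Tail k l) r = tailf (sem A k r) (sem A l r).
Proof.
  unfold Tail, tailf. cbn [sem]. induction (sem A k r) as [|m IH]; [reflexivity|].
  cbn [recf]. rewrite sPred. cbn [sem scons]. rewrite IH. reflexivity.
Qed.
Lemma sElem A i l r : sem A (Elem i l) r = elemf (sem A i r) (sem A l r).
Proof. unfold Elem, elemf. cbn [sem]. rewrite sPred, sTail. reflexivity. Qed.

Section B.
Variables (rI T : nat).

(* env: b0 a1 D2 kind3 s0_4 p5 n6 w7 *)
Definition K01 (kd : nat) : ex :=
  Let (If0 (P1 (V 2)) (V 1) (V 0)) (Let (If0 (P1 (V 3)) (V 1) (V 2)) (Let (P2 (V 4))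
  (let Q := V 0 in let v := V 1 in let u := V 2 in
   let x := P1 Q in let fx := P1 (P2 Q) in let c := P1 (P2 (P2 Q)) in
   let s1 := P1 (P2 (P2 (P2 Q))) in let s2 := P1 (P2 (P2 (P2 (P2 Q)))) in
   let s3 := P2 (P2 (P2 (P2 (P2 Q)))) in
   And (ValidOf false s1) (And (HasOf s1 u (Pr Z x) (K 1))
   (And (ValidOf true s2) (And (HasOf s2 (K T) (Pr u (Pr v x)) fx)
   (match kd with
    | 0 => And (ValidOf false s3) (And (HasOf s3 v (Pr Z fx) c) (Not (Eqb c (K 1))))
    | _ => And (ValidOf true s3) (And (HasOf s3 (K T) (Pr v (Pr u fx)) c) (Not (Eqb c x)))
    end))))))).

Definition K2 : ex :=
  Let (P1 (V 2)) (Let (P2 (V 3))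
  (let R := V 0 in let k := V 1 in let b := V 2 in let a := V 3 in
   let tl := P1 R in let tl' := P1 (P2 R) in let len := P1 (P2 (P2 R)) in
   let c1 := P1 (P2 (P2 (P2 R))) in let c2 := P1 (P2 (P2 (P2 (P2 R)))) in
   let s1 := P1 (P2 (P2 (P2 (P2 (P2 R))))) in let s2 := P2 (P2 (P2 (P2 (P2 (P2 R))))) in
   And (ValidOf false s1) (And (ValidOf true s2)
   (And (HasOf s1 a (Pr (Sc k) tl) c1) (And (HasOf s1 b (Pr (Sc k) tl') c2)
   (And (OrE (And (Eqb c1 (K 1)) (Not (Eqb c2 (K 1)))) (And (Not (Eqb c1 (K 1))) (Eqb c2 (K 1))))
   (And (Eqb (Tail len tl) Z) (And (Eqb (Tail len tl') Z)
   (BAll len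
     (let i := V 0 in let R := V 1 in let b := V 3 in let a := V 4 in
      let tl := P1 R in let tl' := P1 (P2 R) in
      let s1 := P1 (P2 (P2 (P2 (P2 (P2 R))))) in let s2 := P2 (P2 (P2 (P2 (P2 (P2 R))))) in
      And (Not (Tail i tl)) (And (Not (Tail i tl'))
      (And (HasOf s1 a (Pr Z (Elem i tl)) (K 1))
           (HasOf s2 (K T) (Pr a (Pr b (Elem i tl))) (Elem i tl')))))))))))))).

(* env: n0 w1 *)
Definition CHK : ex :=
  Let (P1 (V 1)) (Let (P1 (P2 (V 2))) (Let (P1 (P2 (P2 (V 3)))) (Let (P2 (P2 (P2 (V 4))))
  (Let (P1 (V 3)) (Let (P2 (V 4))
  (* b0 a1 D2 kind3 s0_4 p5 n6 w7 *)
  (And (ValidOf false (V 4)) (And (HasOf (V 4) (K rI) (V 6) (V 5))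
   (OrE (And (Eqb (V 3) (K 0)) (K01 0))
   (OrE (And (Eqb (V 3) (K 1)) (K01 1))
        (And (Eqb (V 3) (K 2)) K2)))))))))).

Section Spec.
Variable A : nat -> nat.
Definition K01spec (kd a b D : nat) : Prop :=
  let bit := fstn D in
  let u := match bit with 0 => a | _ => b end in let v := match bit with 0 => b | _ => a end in
  let Q := sndn D in
  let x := fstn Q in let fx := fstn (sndn Q) in let c := fstn (sndn (sndn Q)) in
  let s1 := fstn (sndn (sndn (sndn Q))) in let s2 := fstn (sndn (sndn (sndn (sndn Q)))) in
  let s3 := sndn (sndn (sndn (sndn (sndn Q)))) in
  validW false A s1 /\ hasW s1 u (pair 0 x) 1 /\ validW true A s2 /\ hasW s2 T (pair u (pair v x)) fx /\
  match kd with
  | 0 => validW false A s3 /\ hasW s3 v (pair 0 fx) c /\ c <> 1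
  | _ => validW true A s3 /\ hasW s3 T (pair v (pair u fx)) c /\ c <> x
  end.

Definition K2spec (a b D : nat) : Prop :=
  let k := fstn D in let R := sndn D in
  let tl := fstn R in let tl' := fstn (sndn R) in let len := fstn (sndn (sndn R)) in
  let c1 := fstn (sndn (sndn (sndn R))) in let c2 := fstn (sndn (sndn (sndn (sndn R)))) in
  let s1 := fstn (sndn (sndn (sndn (sndn (sndn R))))) in let s2 := sndn (sndn (sndn (sndn (sndn (sndn R))))) in
  validW false A s1 /\ validW true A s2 /\ hasW s1 a (pair (S k) tl) c1 /\ hasW s1 b (pair (S k) tl') c2 /\
  ((c1 = 1 /\ c2 <> 1) \/ (c1 <> 1 /\ c2 = 1)) /\
  tailf len tl = 0 /\ tailf len tl' = 0 /\
  (forall i, i < len -> tailf i tl <> 0 /\ tailf i tl' <> 0 /\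
     hasW s1 a (pair 0 (elemf i tl)) 1 /\ hasW s2 T (pair a (pair b (elemf i tl))) (elemf i tl')).

Definition CheckB (n w : nat) : Prop :=
  let p := fstn w in let s0 := fstn (sndn w) in let kind := fstn (sndn (sndn w)) in
  let D := sndn (sndn (sndn w)) in let a := fstn p in let b := sndn p in
  validW false A s0 /\ hasW s0 rI n p /\
  ((kind = 0 /\ K01spec 0 a b D) \/ (kind = 1 /\ K01spec 1 a b D) \/ (kind = 2 /\ K2spec a b D)).
End Spec.

Lemma sEqbN A a b r : sem A (Eqb a b) r <> 0 <-> sem A a r <> sem A b r.
Proof. rewrite sEqb. tauto. Qed.

Lemma sK01 A kd r : sem A (K01 kd) r = 0 <-> K01spec A kd (r 1) (r 0) (r 2).
Proof.
  unfold K01, K01spec. cbn [sem scons]. rewrite !sIf0. cbn [sem scons]. cbv zeta.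
  destruct kd;
  (do 4 (rewrite ?sAnd, ?sEqb, ?sNot, ?sK, ?sValidOf, ?sHasOf, ?sEqbN; cbn [sem scons]));
  destruct (fstn (r 2)); reflexivity.
Qed.
End B.

Lemma sNotTail A k l r : sem A (Not (Tail k l)) r = 0 <-> tailf (sem A k r) (sem A l r) <> 0.
Proof. rewrite sNot, sTail. tauto. Qed.
Lemma sEqbTail A k l r : sem A (Eqb (Tail k l) Z) r = 0 <-> tailf (sem A k r) (sem A l r) = 0.
Proof. rewrite sEqb, sTail. reflexivity. Qed.

Lemma sK2 A T r : sem A (K2 T) r = 0 <-> K2spec T A (r 1) (r 0) (r 2).
Proof.
  unfold K2, K2spec. cbn [sem scons]. cbv zeta.
  do 9 (rewrite ?sAnd, ?sOrE, ?sEqbTail, ?sEqb, ?sNot, ?sK, ?sValidOf, ?sHasOf, ?sEqbN; cbn [sem scons]).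
  rewrite sBAll. cbn [sem scons].
  setoid_rewrite sAnd. setoid_rewrite sNotTail. setoid_rewrite sAnd. setoid_rewrite sNotTail.
  setoid_rewrite sAnd. setoid_rewrite sHasOf. cbn [sem scons]. setoid_rewrite sElem. setoid_rewrite sK.
  cbn [sem scons]. reflexivity.
Qed.

Lemma sCHK A rI T n w r : sem A (CHK rI T) (scons n (scons w r)) = 0 <-> CheckB rI T A n w.
Proof.
  unfold CHK, CheckB. cbn [sem scons]. cbv zeta.
  rewrite !sAnd, !sOrE, !sAnd, !sEqb, !sK, sValidOf, sHasOf, !sK01, sK2. cbn [sem scons].
  rewrite sK. reflexivity.
Qed.

Lemma tailf_S k l : tailf (S k) l = tailf k (sndn (pred l)).
Proof. unfold tailf. rewrite Nat.iter_succ_r. reflexivity. Qed.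

Lemma tail_code i : forall t, tailf i (code_list t) = code_list (skipn i t).
Proof.
  induction i; intros t; [reflexivity|].
  rewrite tailf_S. destruct t as [|x t]; simpl.
  - unfold tailf. clear IHi. induction i; simpl; auto. rewrite IHi; reflexivity.
  - rewrite sndn_pair. apply IHi.
Qed.

Lemma skipn_nth_cons i : forall (t : list nat), i < length t -> skipn i t = nth i t 0 :: skipn (S i) t.
Proof.
  induction i; intros [|x t] H; simpl in *; try lia; auto.
  apply IHi. lia.
Qed.

Lemma elem_code i t : i < length t -> elemf i (code_list t) = nth i t 0.
Proof.
  intros H. unfold elemf. rewrite tail_code, skipn_nth_cons by auto. simpl. apply fstn_pair.
Qed.

Lemma tail_code_nz i t : i < length t -> tailf i (code_list t) <> 0.
Proof. intros H. rewrite tail_code, skipn_nth_cons by auto. simpl. lia. Qed.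

Lemma tail_code_len t : tailf (length t) (code_list t) = 0.
Proof. rewrite tail_code, skipn_all. reflexivity. Qed.

Lemma elemf_S i l : elemf (S i) l = elemf i (sndn (pred l)).
Proof. unfold elemf. rewrite tailf_S. reflexivity. Qed.

Lemma decode_code len : forall tl, tailf len tl = 0 -> (forall i, i < len -> tailf i tl <> 0) ->
  tl = code_list (map (fun i => elemf i tl) (seq 0 len)).
Proof.
  induction len; intros tl H0 Hnz; [exact H0|].
  assert (Htl : tl <> 0) by (apply (Hnz 0); lia).
  rewrite tailf_S in H0.
  pose proof (IHlen (sndn (pred tl)) H0) as IH.
  assert (IH' : sndn (pred tl) = code_list (map (fun i => elemf i (sndn (pred tl))) (seq 0 len))).
  { apply IH. intros i Hi. rewrite <- tailf_S. apply Hnz. lia. }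
  simpl. rewrite <- seq_shift, map_map.
  assert (E : map (fun i => elemf (S i) tl) (seq 0 len) = map (fun i => elemf i (sndn (pred tl))) (seq 0 len)).
  { apply map_ext. intros; apply elemf_S. }
  rewrite E, <- IH'. unfold elemf, tailf; simpl.
  rewrite pair_fs. lia.
Qed.

Lemma seq_nth_lt len i : i < len -> In i (seq 0 len).
Proof. intros; apply in_seq; lia. Qed.

Lemma W_multi o A N (F : nat -> nat * nat * nat) :
  (forall i, i < N -> let '(e, x, y) := F i in eval (Aof o A) (decode e) x y) ->
  exists w, validW o A w /\ forall i, i < N -> let '(e, x, y) := F i in hasW w e x y.
Proof.
  intros H.
  destruct (collect o A N (fun L i => let '(e, x, y) := F i in hasL L e x y)) as [L [HV HL]].
  { intros L1 L2 m. destruct (F m) as [[e x] y]. apply hasL_app_l. }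
  { intros L1 L2 m. destruct (F m) as [[e x] y]. apply hasL_app_r. }
  { intros m Hm. specialize (H m Hm). destruct (F m) as [[e x] y].
    apply (derivations_complete o A _ _ _ H e eq_refl). }
  exists (pair (length L) (lcode L)). unfold validW, hasW. rewrite fstn_pair, sndn_pair. split.
  - intros i Hi. apply (VE_transfer o A (fun j => nth j L 0) _ i i).
    + apply entn_lcode.
    + intros e' x' y' [j [Hj Hp]]. exists j. rewrite entn_lcode. auto.
    + intros e' x' [j [Hj Hp]]. exists j. rewrite entn_lcode. auto.
    + apply HV; auto.
  - intros i Hi. specialize (HL i Hi). destruct (F i) as [[e x] y].
    destruct HL as [j [Hj Hp]]. exists j. rewrite entn_lcode. auto.
Qed.

Section PartB.
Variables (K : structure -> Prop) (rI T : nat) (D : nat -> bool).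
Hypothesis Hred : forall n, exists a b, phi rI n (pair a b) /\ inK K a /\ inK K b /\
  (Isomorphic (M a) (M b) <-> ~ KleeneO n).
Hypothesis Htot : forall i j n, exists y, Phi (chi D) T (pair i (pair j n)) y.
Hypothesis Hloq : forall i j, inK K i -> inK K j -> Isomorphic (M i) (M j) ->
      exists f g : nat -> nat,
        (forall n, Phi (chi D) T (pair i (pair j n)) (f n)) /\
        (forall n, Phi (chi D) T (pair j (pair i n)) (g n)) /\
        IsIso (M i) (M j) f /\
        (forall x, sdom (M i) x -> g (f x) = x) /\
        (forall y, sdom (M j) y -> f (g y) = y).

Lemma phiW e x y w : validW false (chi D) w -> hasW w e x y -> phi e x y.
Proof. intros V H. exact (W_sound false (chi D) w e x y V H). Qed.
Lemma PhiW e x y w : validW true (chi D) w -> hasW w e x y -> Phi (chi D) e x y.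
Proof. intros V H. exact (W_sound true (chi D) w e x y V H). Qed.

Lemma B_sound n w : CheckB rI T (chi D) n w -> KleeneO n.
Proof.
  unfold CheckB. cbv zeta. intros [V0 [H0 Hk]].
  apply phiW in H0; [|exact V0].
  destruct (Hred n) as [a [b [Hr [Ka [Kb Hiso]]]]].
  pose proof (eval_det _ _ _ _ H0 _ Hr) as Ep. rewrite Ep in Hk. rewrite fstn_pair, sndn_pair in Hk.
  apply NNPP. intros HnO. apply Hiso in HnO.
  destruct (Hloq a b Ka Kb HnO) as [f [g [Hf [Hg [HI [Hgf Hfg]]]]]].
  destruct HI as [Hdom [Hinj [Hsurj Hrel]]].
  assert (Hga : forall y, sdom (M b) y -> sdom (M a) (g y)).
  { intros y Hy. destruct (Hsurj y Hy) as [x [Hx Ex]]. subst y. rewrite Hgf; auto. }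
  set (Dd := sndn (sndn (sndn w))) in *.
  destruct Hk as [[_ Hk]|[[_ Hk]|[_ Hk]]].
  - unfold K01spec in Hk. cbv zeta in Hk.
    destruct (fstn Dd) as [|bit];
      destruct Hk as [V1 [H1 [V2 [H2 [V3 [H3 Hc]]]]]];
      apply phiW in H1; auto; apply PhiW in H2; auto; apply phiW in H3; auto.
    + pose proof (eval_det _ _ _ _ H2 _ (Hf _)) as E. rewrite E in H3.
      apply Hc. apply (eval_det _ _ _ _ H3). apply (Hdom _ H1).
    + pose proof (eval_det _ _ _ _ H2 _ (Hg _)) as E. rewrite E in H3.
      apply Hc. apply (eval_det _ _ _ _ H3). apply (Hga _ H1).
  - unfold K01spec in Hk. cbv zeta in Hk.
    destruct (fstn Dd) as [|bit];
      destruct Hk as [V1 [H1 [V2 [H2 [V3 [H3 Hc]]]]]];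
      apply phiW in H1; auto; apply PhiW in H2; auto; apply PhiW in H3; auto.
    + pose proof (eval_det _ _ _ _ H2 _ (Hf _)) as E. rewrite E in H3.
      pose proof (eval_det _ _ _ _ H3 _ (Hg _)) as E2. apply Hc. rewrite E2. apply Hgf. exact H1.
    + pose proof (eval_det _ _ _ _ H2 _ (Hg _)) as E. rewrite E in H3.
      pose proof (eval_det _ _ _ _ H3 _ (Hf _)) as E2. apply Hc. rewrite E2. apply Hfg. exact H1.
  - unfold K2spec in Hk. cbv zeta in Hk.
    set (R := sndn Dd) in *. set (k := fstn Dd) in *.
    set (tl := fstn R) in *. set (tl' := fstn (sndn R)) in *. set (len := fstn (sndn (sndn R))) in *.
    set (c1 := fstn (sndn (sndn (sndn R)))) in *. set (c2 := fstn (sndn (sndn (sndn (sndn R))))) in *.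
    destruct Hk as [V1 [V2 [H1 [H2 [Hxor [T1 [T2 Hall]]]]]]].
    apply phiW in H1; auto. apply phiW in H2; auto.
    set (t := map (fun i => elemf i tl) (seq 0 len)).
    assert (Etl : tl = code_list t).
    { apply decode_code; auto. intros i Hi; apply Hall; auto. }
    assert (Etl' : tl' = code_list (map f t)).
    { rewrite (decode_code len tl') at 1; auto; [|intros i Hi; apply Hall; auto].
      f_equal. unfold t. rewrite map_map. apply map_ext_in. intros i Hi.
      apply in_seq in Hi. destruct (Hall i ltac:(lia)) as [_ [_ [_ Hth]]].
      apply PhiW in Hth; auto. apply (eval_det _ _ _ _ Hth _ (Hf _)). }
    assert (Hft : Forall (sdom (M a)) t).
    { apply Forall_forall. intros x Hx. unfold t in Hx. apply in_map_iff in Hx.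
      destruct Hx as [i [Ei Hi]]. apply in_seq in Hi. subst x.
      destruct (Hall i ltac:(lia)) as [_ [_ [Hd _]]]. exact (phiW _ _ _ _ V1 Hd). }
    specialize (Hrel k t Hft). simpl in Hrel.
    rewrite <- Etl, <- Etl' in Hrel.
    destruct Hxor as [[E1 E2]|[E1 E2]].
    + rewrite E1 in H1. apply Hrel in H1. apply E2. exact (eval_det _ _ _ _ H2 _ H1).
    + rewrite E2 in H2. apply Hrel in H2. apply E1. exact (eval_det _ _ _ _ H1 _ H2).
Qed.

Lemma W_phi e x y : phi e x y -> exists w, validW false (chi D) w /\ hasW w e x y.
Proof. intros H. exact (W_complete false (chi D) e x y H). Qed.
Lemma W_Phi e x y : Phi (chi D) e x y -> exists w, validW true (chi D) w /\ hasW w e x y.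
Proof. intros H. exact (W_complete true (chi D) e x y H). Qed.

Lemma tot_ne1 a z : inK K a -> ~ phi a z 1 -> exists c, c <> 1 /\ phi a z c.
Proof.
  intros [Ha _] Hn. destruct (Ha z) as [c [Hc Hp]]. exists c. split; auto.
  intros ->; auto.
Qed.
Lemma tot_val a z : inK K a -> exists c, phi a z c.
Proof. intros [Ha _]. destruct (Ha z) as [c [_ Hp]]; eauto. Qed.

Lemma mkCheck n a b s0 kind Dd : validW false (chi D) s0 -> hasW s0 rI n (pair a b) ->
  ((kind = 0 /\ K01spec T (chi D) 0 a b Dd) \/ (kind = 1 /\ K01spec T (chi D) 1 a b Dd) \/
   (kind = 2 /\ K2spec T (chi D) a b Dd)) ->
  CheckB rI T (chi D) n (pair (pair a b) (pair s0 (pair kind Dd))).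
Proof.
  intros V H Hk. unfold CheckB. cbv zeta. repeat rewrite ?fstn_pair, ?sndn_pair. auto.
Qed.

Lemma K01_intro kd a b bit x fx c s1 s2 s3 :
  let u := match bit with 0 => a | _ => b end in let v := match bit with 0 => b | _ => a end in
  validW false (chi D) s1 -> hasW s1 u (pair 0 x) 1 -> validW true (chi D) s2 ->
  hasW s2 T (pair u (pair v x)) fx ->
  match kd with
  | 0 => validW false (chi D) s3 /\ hasW s3 v (pair 0 fx) c /\ c <> 1
  | _ => validW true (chi D) s3 /\ hasW s3 T (pair v (pair u fx)) c /\ c <> x
  end ->
  K01spec T (chi D) kd a b (pair bit (pair x (pair fx (pair c (pair s1 (pair s2 s3)))))).
Proof.
  intros u v H1 H2 H3 H4 H5. unfold K01spec. cbv zeta. repeat rewrite ?fstn_pair, ?sndn_pair.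
  auto.
Qed.

Lemma B_complete n : KleeneO n -> exists w, CheckB rI T (chi D) n w.
Proof.
  intros HO.
  destruct (Hred n) as [a [b [Hr [Ka [Kb Hiso]]]]].
  assert (HnI : ~ Isomorphic (M a) (M b)) by (intros H; apply Hiso in H; auto).
  destruct (W_phi _ _ _ Hr) as [s0 [V0 H0]].
  set (f := fun x => proj1_sig (constructive_indefinite_description _ (Htot a b x))).
  set (g := fun x => proj1_sig (constructive_indefinite_description _ (Htot b a x))).
  assert (Hf : forall x, Phi (chi D) T (pair a (pair b x)) (f x)) by (intros; apply proj2_sig).
  assert (Hg : forall x, Phi (chi D) T (pair b (pair a x)) (g x)) by (intros; apply proj2_sig).
  destruct (classic (exists x, phi a (pair 0 x) 1 /\ ~ phi b (pair 0 (f x)) 1)) as [[x [H1 H2]]|N0a].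
  { destruct (tot_ne1 b _ Kb H2) as [c [Hc Hpc]].
    destruct (W_phi _ _ _ H1) as [s1 [V1 Hs1]]. destruct (W_Phi _ _ _ (Hf x)) as [s2 [V2 Hs2]].
    destruct (W_phi _ _ _ Hpc) as [s3 [V3 Hs3]].
    eexists. apply (mkCheck n a b s0 0); auto. left; split; auto.
    apply (K01_intro 0 a b 0 x (f x) c s1 s2 s3); auto. }
  destruct (classic (exists y, phi b (pair 0 y) 1 /\ ~ phi a (pair 0 (g y)) 1)) as [[x [H1 H2]]|N0b].
  { destruct (tot_ne1 a _ Ka H2) as [c [Hc Hpc]].
    destruct (W_phi _ _ _ H1) as [s1 [V1 Hs1]]. destruct (W_Phi _ _ _ (Hg x)) as [s2 [V2 Hs2]].
    destruct (W_phi _ _ _ Hpc) as [s3 [V3 Hs3]].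
    eexists. apply (mkCheck n a b s0 0); auto. left; split; auto.
    apply (K01_intro 0 a b 1 x (g x) c s1 s2 s3); auto. }
  destruct (classic (exists x, phi a (pair 0 x) 1 /\ g (f x) <> x)) as [[x [H1 H2]]|N1a].
  { destruct (W_phi _ _ _ H1) as [s1 [V1 Hs1]]. destruct (W_Phi _ _ _ (Hf x)) as [s2 [V2 Hs2]].
    destruct (W_Phi _ _ _ (Hg (f x))) as [s3 [V3 Hs3]].
    eexists. apply (mkCheck n a b s0 1); auto. right; left; split; auto.
    apply (K01_intro 1 a b 0 x (f x) (g (f x)) s1 s2 s3); auto. }
  destruct (classic (exists y, phi b (pair 0 y) 1 /\ f (g y) <> y)) as [[x [H1 H2]]|N1b].
  { destruct (W_phi _ _ _ H1) as [s1 [V1 Hs1]]. destruct (W_Phi _ _ _ (Hg x)) as [s2 [V2 Hs2]].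
    destruct (W_Phi _ _ _ (Hf (g x))) as [s3 [V3 Hs3]].
    eexists. apply (mkCheck n a b s0 1); auto. right; left; split; auto.
    apply (K01_intro 1 a b 1 x (g x) (f (g x)) s1 s2 s3); auto. }
  destruct (classic (exists k t, Forall (fun x => phi a (pair 0 x) 1) t /\
     ~ (phi a (pair (S k) (code_list t)) 1 <-> phi b (pair (S k) (code_list (map f t))) 1)))
    as [[k [t [Hft Hnr]]]|N2].
  2:{ exfalso. apply HnI. exists f. split; [|split; [|split]].
      - intros x Hx. apply NNPP. intros H. apply N0a. exists x. split; [exact Hx|exact H].
      - intros x y Hx Hy E.
        assert (Ex : g (f x) = x) by (apply NNPP; intros H; apply N1a; exists x; split; [exact Hx|exact H]).
        assert (Ey : g (f y) = y) by (apply NNPP; intros H; apply N1a; exists y; split; [exact Hy|exact H]).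
        congruence.
      - intros y Hy. exists (g y). split.
        + apply NNPP. intros H. apply N0b. exists y; split; [exact Hy|exact H].
        + apply NNPP. intros H. apply N1b. exists y; split; [exact Hy|exact H].
      - intros k t Ht. apply NNPP. intros H. apply N2. exists k, t. split; auto. }
  destruct (tot_val a (pair (S k) (code_list t)) Ka) as [c1 Hc1].
  destruct (tot_val b (pair (S k) (code_list (map f t))) Kb) as [c2 Hc2].
  assert (Hxor : (c1 = 1 /\ c2 <> 1) \/ (c1 <> 1 /\ c2 = 1)).
  { destruct (Nat.eq_dec c1 1) as [E1|E1]; destruct (Nat.eq_dec c2 1) as [E2|E2]; subst; auto.
    - exfalso; apply Hnr; split; auto.
    - exfalso; apply Hnr; split; intros H.
      + exfalso; apply E1; exact (eval_det _ _ _ _ Hc1 _ H).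
      + exfalso; apply E2; exact (eval_det _ _ _ _ Hc2 _ H). }
  set (len := length t).
  destruct (W_multi false (chi D) (len + 2)
    (fun i => if i <? len then (a, pair 0 (nth i t 0), 1)
              else if i =? len then (a, pair (S k) (code_list t), c1)
              else (b, pair (S k) (code_list (map f t)), c2))) as [s1 [V1 Hs1]].
  { intros i Hi. destruct (Nat.ltb_spec i len).
    - rewrite Forall_forall in Hft. apply Hft. apply nth_In. auto.
    - destruct (Nat.eqb_spec i len); auto. }
  destruct (W_multi true (chi D) len
    (fun i => (T, pair a (pair b (nth i t 0)), f (nth i t 0)))) as [s2 [V2 Hs2]].
  { intros i Hi. apply Hf. }
  eexists. apply (mkCheck n a b s0 2); auto. right; right; split; auto.
  unfold K2spec. cbv zeta. repeat rewrite ?fstn_pair, ?sndn_pair.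
  split; [exact V1|]. split; [exact V2|].
  split; [specialize (Hs1 len ltac:(lia)); rewrite Nat.ltb_irrefl, Nat.eqb_refl in Hs1; exact Hs1|].
  split; [specialize (Hs1 (S len) ltac:(lia));
          destruct (Nat.ltb_spec (S len) len); [lia|];
          destruct (Nat.eqb_spec (S len) len); [lia|]; exact Hs1|].
  split; [exact Hxor|].
  split; [apply tail_code_len|].
  split; [unfold len; rewrite <- (length_map f t); apply tail_code_len|].
  intros i Hi.
  split; [apply tail_code_nz; auto|].
  split; [apply tail_code_nz; rewrite length_map; auto|].
  rewrite !elem_code by (rewrite ?length_map; auto).
  split.
  - specialize (Hs1 i ltac:(lia)). destruct (Nat.ltb_spec i len); [exact Hs1|lia].
  - rewrite (nth_indep (map f t) 0 (f 0)) by (rewrite length_map; auto).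
    rewrite map_nth. apply (Hs2 i Hi).
Qed.
End PartB.

Definition wrap2 (e : ex) : code := CComp (comp e) (CPair CP1 (CPair CP2 CZero)).

Lemma proj0 i : proj i 0 = 0.
Proof. induction i; simpl; auto. Qed.

Lemma wrap2_eval A e n m : eval A (wrap2 e) (pair n m) (sem A e (scons n (scons m (fun _ => 0)))).
Proof.
  unfold wrap2. eapply eComp.
  - apply ePair; [apply eP1|]. apply ePair; [apply eP2|apply eZero].
  - replace (sem A e (scons n (scons m (fun _ => 0)))) with (sem A e (envof (pair n (pair m 0)))).
    + apply comp_correct.
    + apply sem_ext. intros [|[|i]]; unfold envof; simpl; repeat rewrite ?fstn_pair, ?sndn_pair; auto.
      apply proj0.
Qed.

Lemma wrap2_iff A e n m y : Phi A (encode (wrap2 e)) (pair n m) y <->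
  y = sem A e (scons n (scons m (fun _ => 0))).
Proof.
  unfold Phi. rewrite decode_encode. split.
  - intros H. exact (eval_det _ _ _ _ H _ (wrap2_eval A e n m)).
  - intros ->. apply wrap2_eval.
Qed.

Lemma Sigma11_notO : Sigma11 (fun n => ~ KleeneO n).
Proof.
  exists (encode (wrap2 VER)). intros n. unfold KleeneO.
  rewrite notO_Sigma11_spec. split; intros [f H]; exists f; intros m; specialize (H m).
  - apply wrap2_iff. symmetry. apply sVER. exact H.
  - apply wrap2_iff in H. apply (sVER f n m (fun _ => 0)). auto.
Qed.

Lemma least_ex (P : nat -> Prop) : (exists n, P n) -> exists n, P n /\ forall m, m < n -> ~ P m.
Proof.
  intros [n Hn]. induction n as [n IH] using lt_wf_ind.
  destruct (classic (exists m, m < n /\ P m)) as [[m [Hm Pm]]|Hno].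
  - exact (IH m Hm Pm).
  - exists n. split; auto. intros m Hm Pm. apply Hno. eauto.
Qed.

Theorem mainTheorem13 (K : structure -> Prop) (d : (nat -> bool) -> Prop) :
  IsTuringDegree d ->
  IsoProblemSigma11Complete K ->
  LoquaciouslyHigh K d ->
  UniformlyHigh K d /\ CErelative KleeneO d.
Proof.
  intros _ Hcomp Hloq. destruct Hloq as [D [HdD [T [Htot Hiso]]]].
  split.
  - exists D. split; auto. exists T. intros i j Hi Hj HI.
    destruct (Hiso i j Hi Hj HI) as [f [g [H1 [_ [H3 _]]]]]. exists f; auto.
  - destruct (Hcomp _ Sigma11_notO) as [rI HrI].
    assert (Hred : forall n, exists a b, phi rI n (pair a b) /\ inK K a /\ inK K b /\
      (Isomorphic (M a) (M b) <-> ~ KleeneO n)).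
    { intros n. destruct (HrI n) as [a [b H]]. exists a, b. exact H. }
    exists D. split; auto.
    exists (encode (CMu (wrap2 (CHK rI T)))). intros n. split.
    + intros HO. destruct (B_complete K rI T D Hred Htot n HO) as [w Hw].
      destruct (least_ex (fun w => sem (chi D) (CHK rI T) (scons n (scons w (fun _ => 0))) = 0))
        as [w0 [Hw0 Hmin]].
      { exists w. apply sCHK. exact Hw. }
      exists w0. unfold Phi. rewrite decode_encode. apply eMu.
      * pose proof (wrap2_eval (chi D) (CHK rI T) n w0) as E. rewrite Hw0 in E. exact E.
      * intros m Hm. exists (sem (chi D) (CHK rI T) (scons n (scons m (fun _ => 0)))).
        split; [apply Hmin; auto|apply wrap2_eval].
    + intros [y Hy]. unfold Phi in Hy. rewrite decode_encode in Hy.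
      inversion Hy as [| | | | | | | | | f' x' n' Hz Hall]; subst.
      pose proof (eval_det _ _ _ _ Hz _ (wrap2_eval _ _ _ _)) as E.
      apply (B_sound K rI T D Hred Hiso n y). apply (sCHK (chi D) rI T n y (fun _ => 0)). auto.
Qed.
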